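(* Let $\mathcal{A}$ be an additive category and $\Phi\colon\mathcal{A}\to\mathcal{A}$ an automorphism of additive categories, and let $i\colon\mathcal{A}\to\mathcal{A}_\Phi[t]$ be the inclusion. (1) Let $M$ be a $\mathbb{Z}\mathcal{A}_\Phi[t]$-module. If $\mathrm{pdim}_{\mathbb{Z}\mathcal{A}}(i^*M)\le d$, then $\mathrm{pdim}_{\mathbb{Z}\mathcal{A}_\Phi[t]}(M)\le d+1$. (2) If $\mathcal{A}$ has global dimension $\le d$, then $\mathcal{A}_\Phi[t]$ has global dimension $\le d+1$.
   Context: $\mathcal{A}_\Phi[t]$ has the objects of $\mathcal{A}$ and morphisms $A\to B$ finite sums $\sum_{k\ge0}f_kt^k$ with $f_k\colon\Phi^k(A)\to B$, composed by $(\sum_jg_jt^j)\circ(\sum_kf_kt^k)=\sum_n(\sum_{j+k=n}g_j\circ\Phi^j(f_k))t^n$; $i$ sends $f$ to $f\cdot t^0$. For an additive category $\mathcal{B}$, a $\mathbb{Z}\mathcal{B}$-module is an additive contravariant functor $\mathcal{B}\to$ abelian groups; $i^*$ denotes restriction along $i$ (precomposition). $\mathrm{pdim}_{\mathbb{Z}\mathcal{B}}(M)\le d$ means there is an exact sequence $0\to P_d\to\cdots\to P_0\to M\to0$ of projective $\mathbb{Z}\mathcal{B}$-modules; $\mathcal{B}$ has global dimension $\le d$ if every $\mathbb{Z}\mathcal{B}$-module has projective dimension $\le d$. *)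

(* Defs.v *)
From Stdlib Require Import Lia.
From mathcomp Require Import all_boot.

From mathcomp Require Import zify.

Set Implicit Arguments. Unset Strict Implicit. Unset Printing Implicit Defensive.

Definition abgroup_laws (T : Type) (z : T) (a : T -> T -> T) (o : T -> T) : Prop :=
  [/\ forall x y w, a x (a y w) = a (a x y) w, forall x y, a x y = a y x,
      forall x, a z x = x & forall x, a (o x) x = z].

Lemma abg_idem T (z : T) a o : abgroup_laws z a o -> forall x : T, a x x = x -> x = z.
Proof.
case=> aA aC a0 aN x hx.
have h : a (o x) (a x x) = a (o x) x by rewrite hx.
by rewrite aA aN a0 in h.
Qed.

Record rawcat := RawCat {
  Ob : Type;
  Hom : Ob -> Ob -> Type;
  hzero : forall X Y, Hom X Y;
  hadd : forall X Y, Hom X Y -> Hom X Y -> Hom X Y;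
  hopp : forall X Y, Hom X Y -> Hom X Y;
  comp : forall X Y Z, Hom Y Z -> Hom X Y -> Hom X Z;
  idm : forall X, Hom X X }.
Arguments Hom {_} X Y.
Arguments hzero {_ X Y}.
Arguments hadd {_ X Y}.
Arguments hopp {_ X Y}.
Arguments comp {_ X Y Z}.
Arguments idm {_} X.

Definition preadditive (C : rawcat) : Prop :=
  [/\ forall X Y : Ob C, abgroup_laws (@hzero C X Y) hadd hopp,
      forall (W X Y Z : Ob C) (h : Hom Y Z) (g : Hom X Y) (f : Hom W X),
        comp h (comp g f) = comp (comp h g) f,
      forall (X Y : Ob C) (f : Hom X Y), comp (idm Y) f = f /\ comp f (idm X) = f,
      forall (X Y Z : Ob C) (g g' : Hom Y Z) (f : Hom X Y),
        comp (hadd g g') f = hadd (comp g f) (comp g' f)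
    & forall (X Y Z : Ob C) (g : Hom Y Z) (f f' : Hom X Y),
        comp g (hadd f f') = hadd (comp g f) (comp g f')].

Definition has_zero_object (C : rawcat) : Prop :=
  exists Z : Ob C, idm Z = hzero.

Definition has_biproducts (C : rawcat) : Prop :=
  forall X Y : Ob C, exists (P : Ob C) (p1 : Hom P X) (p2 : Hom P Y)
                            (i1 : Hom X P) (i2 : Hom Y P),
    [/\ comp p1 i1 = idm X, comp p2 i2 = idm Y, comp p1 i2 = hzero,
        comp p2 i1 = hzero & hadd (comp i1 p1) (comp i2 p2) = idm P].

Definition additive (C : rawcat) : Prop :=
  [/\ preadditive C, has_zero_object C & has_biproducts C].

Record rawfunctor (C D : rawcat) := RawFunctor {
  fobj : Ob C -> Ob D;
  fmap : forall X Y : Ob C, Hom X Y -> Hom (fobj X) (fobj Y) }.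
Arguments fmap {_ _} _ {X Y}.

Definition additive_functor (C D : rawcat) (F : rawfunctor C D) : Prop :=
  [/\ forall X : Ob C, fmap F (idm X) = idm (fobj F X),
      forall (X Y Z : Ob C) (g : Hom Y Z) (f : Hom X Y),
        fmap F (comp g f) = comp (fmap F g) (fmap F f)
    & forall (X Y : Ob C) (f f' : Hom X Y), fmap F (hadd f f') = hadd (fmap F f) (fmap F f')].

Definition automorphism (C : rawcat) (F : rawfunctor C C) : Prop :=
  [/\ additive_functor F, bijective (fobj F)
    & forall X Y : Ob C, bijective (@fmap C C F X Y)].

(* ZC-modules: additive contravariant functors C -> abelian groups.   *)
Record rawmodule (C : rawcat) := RawModule {
  mob : Ob C -> Type;
  mzero : forall X, mob X;
  madd : forall X, mob X -> mob X -> mob X;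
  mopp : forall X, mob X -> mob X;
  mact : forall X Y : Ob C, Hom X Y -> mob Y -> mob X }.
Arguments mzero {_} _ X.
Arguments madd {_} _ {X}.
Arguments mopp {_} _ {X}.
Arguments mact {_} _ {X Y}.

Definition module_laws (C : rawcat) (M : rawmodule C) : Prop :=
  [/\ forall X, abgroup_laws (mzero M X) (@madd C M X) (@mopp C M X),
      forall (X Y : Ob C) (f : Hom X Y) (x y : mob M Y),
        mact M f (madd M x y) = madd M (mact M f x) (mact M f y),
      forall (X Y : Ob C) (f g : Hom X Y) (x : mob M Y),
        mact M (hadd f g) x = madd M (mact M f x) (mact M g x),
      forall (X : Ob C) (x : mob M X), mact M (idm X) x = x
    & forall (X Y Z : Ob C) (g : Hom Y Z) (f : Hom X Y) (x : mob M Z),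
        mact M (comp g f) x = mact M f (mact M g x)].

Record module (C : rawcat) := Module {
  mraw :> rawmodule C;
  mlaws : module_laws mraw }.

Definition modmap (C : rawcat) (M N : rawmodule C) := forall X : Ob C, mob M X -> mob N X.

Definition is_modhom (C : rawcat) (M N : rawmodule C) (h : modmap M N) : Prop :=
  (forall X (x y : mob M X), h X (madd M x y) = madd N (h X x) (h X y)) /\
  (forall (X Y : Ob C) (f : Hom X Y) (x : mob M Y), h X (mact M f x) = mact N f (h Y x)).

Definition epi_modhom (C : rawcat) (M N : rawmodule C) (h : modmap M N) : Prop :=
  is_modhom h /\ forall X (y : mob N X), exists x, h X x = y.

Definition projective (C : rawcat) (P : rawmodule C) : Prop :=
  forall (M N : module C) (p : modmap M N) (g : modmap P N),
    epi_modhom p -> is_modhom g ->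
    exists h : modmap P M, is_modhom h /\ forall X x, p X (h X x) = g X x.

Definition exact_at (C : rawcat) (M N K : rawmodule C) (f : modmap M N) (g : modmap N K) :
  Prop := forall X (y : mob N X), g X y = mzero K X <-> exists x, f X x = y.

(* pdim M <= d : there is an exact sequence 0 -> P_d -> ... -> P_0 -> M -> 0
   of projective modules (encoded with P_n = 0 for n > d). *)
Definition pdim_le (C : rawcat) (M : rawmodule C) (d : nat) : Prop :=
  exists (P : nat -> module C) (dP : forall n, modmap (P n.+1) (P n))
         (eps : modmap (P 0) M),
    [/\ (forall n, is_modhom (dP n)) /\ epi_modhom eps,
        (forall n, n <= d -> projective (P n)),
        (forall n, d < n -> forall X (x : mob (P n) X), x = mzero (P n) X),
        exact_at (dP 0) eps
      & forall n, exact_at (dP n.+1) (dP n)].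

Definition gldim_le (C : rawcat) (d : nat) : Prop :=
  forall M : module C, pdim_le M d.

Section Poly.
Variables (C : rawcat) (F : rawfunctor C C).
Hypotheses (hC : preadditive C) (hF : additive_functor F).
Local Notation Fo := (fobj F).

Fixpoint powM (k : nat) (X Y : Ob C) (f : Hom X Y) {struct k} :
    Hom (iter k Fo X) (iter k Fo Y) :=
  match k return Hom (iter k Fo X) (iter k Fo Y) with
  | 0 => f
  | k'.+1 => fmap F (powM k' f)
  end.

Definition castD (X X' Y : Ob C) (e : X = X') (f : Hom X Y) : Hom X' Y :=
  eq_rect X (fun Z => Hom Z Y) f X' e.

Lemma iter_split (n : nat) (j : 'I_n.+1) (X : Ob C) :
  iter j Fo (iter (n - j) Fo X) = iter n Fo X.
Proof. by rewrite -iterD subnKC // -ltnS. Qed.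

Definition fsupp (X : nat -> Ob C) (Y : Ob C) (f : forall k, Hom (X k) Y) : Prop :=
  exists N, forall k, N <= k -> f k = hzero.

(* morphisms X -> Y : finite sums  sum_k f_k t^k  with f_k : Phi^k X -> Y *)
Definition PHom (X Y : Ob C) :=
  { f : forall k, Hom (iter k Fo X) Y | fsupp f }.

Lemma add00 (X Y : Ob C) : hadd (@hzero C X Y) hzero = hzero.
Proof. by case: hC => /(_ X Y) [_ _ a0 _] *; rewrite a0. Qed.

Lemma opp0 (X Y : Ob C) : hopp (@hzero C X Y) = hzero.
Proof.
case: hC => /(_ X Y) hg _ _ _ _; have [aA aC a0 aN] := hg.
apply: (abg_idem hg).
have h := aN hzero; rewrite aC a0 in h.
by rewrite {1}h a0 h.
Qed.

Lemma comp0l (X Y Z : Ob C) (f : Hom X Y) : comp (@hzero C Y Z) f = hzero.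
Proof.
case: hC => hg _ _ hl _; apply: (abg_idem (hg X Z)).
by rewrite -hl add00.
Qed.

Lemma comp0r (X Y Z : Ob C) (g : Hom Y Z) : comp g (@hzero C X Y) = hzero.
Proof.
case: hC => hg _ _ _ hr; apply: (abg_idem (hg X Z)).
by rewrite -hr add00.
Qed.

Lemma fmap0 (X Y : Ob C) : fmap F (@hzero C X Y) = hzero.
Proof.
case: hF => _ _ ha; case: hC => hg _ _ _ _; apply: (abg_idem (hg _ _)).
by rewrite -ha add00.
Qed.

Lemma powM0 k (X Y : Ob C) : powM k (@hzero C X Y) = hzero.
Proof. by elim: k => //= k ->; rewrite fmap0. Qed.

Lemma castD0 (X X' Y : Ob C) (e : X = X') : castD e (@hzero C X Y) = hzero.
Proof. by case: X' / e. Qed.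

Definition pzero (X Y : Ob C) : PHom X Y :=
  exist _ (fun k => hzero) (ex_intro _ 0 (fun _ _ => erefl)).

Definition padd (X Y : Ob C) (f g : PHom X Y) : PHom X Y.
Proof.
exists (fun k => hadd (proj1_sig f k) (proj1_sig g k)).
case: f g => f [Nf hf] [g [Ng hg]] /=; exists (maxn Nf Ng) => k hk.
by rewrite hf ?hg ?add00 //; lia.
Defined.

Definition popp (X Y : Ob C) (f : PHom X Y) : PHom X Y.
Proof.
exists (fun k => hopp (proj1_sig f k)).
case: f => f [Nf hf] /=; exists Nf => k hk; by rewrite hf ?opp0.
Defined.

(* coefficient of t^n in (sum_j g_j t^j) o (sum_k f_k t^k) *)
Definition pcoef (X Y Z : Ob C) (g : forall j, Hom (iter j Fo Y) Z)
    (f : forall k, Hom (iter k Fo X) Y) (n : nat) : Hom (iter n Fo X) Z :=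
  foldr (fun (j : 'I_n.+1) acc =>
           hadd (castD (iter_split j X) (comp (g j) (powM j (f (n - j))))) acc)
        hzero (enum 'I_n.+1).

Definition pcomp (X Y Z : Ob C) (g : PHom Y Z) (f : PHom X Y) : PHom X Z.
Proof.
exists (pcoef (proj1_sig g) (proj1_sig f)).
case: g f => g [Ng hg] [f [Nf hf]] /=; exists (Ng + Nf) => n hn.
rewrite /pcoef; elim: (enum _) => //= j s ->.
have [le|lt] := leqP Ng j; first by rewrite hg // comp0l castD0 add00.
by rewrite hf ?powM0 ?comp0r ?castD0 ?add00 //; lia.
Defined.

Definition pmono0 (X Y : Ob C) (f : Hom X Y) : PHom X Y.
Proof.
exists (fun k => match k return Hom (iter k Fo X) Y with 0 => f | _.+1 => hzero end).
by exists 1 => -[].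
Defined.

Definition pid (X : Ob C) : PHom X X := pmono0 (idm X).

Definition polycat : rawcat :=
  {| Ob := Ob C; Hom := PHom; hzero := pzero; hadd := padd; hopp := popp;
     comp := pcomp; idm := pid |}.

(* restriction  i^* M  along the inclusion  i : A -> A_Phi[t],  f |-> f t^0 *)
Definition restrict (M : rawmodule polycat) : rawmodule C :=
  @RawModule C (@mob polycat M) (mzero M) (@madd polycat M) (@mopp polycat M)
    (fun (X Y : Ob C) (f : @Hom C X Y) (x : @mob polycat M Y) =>
       @mact polycat M X Y (pmono0 f) x).

End Poly.

Definition additive_preadditive (C : rawcat) (h : additive C) : preadditive C :=
  let: And3 p _ _ := h in p.
Definition automorphism_additive (C : rawcat) (F : rawfunctor C C)
  (h : automorphism F) : additive_functor F := let: And3 p _ _ := h in p.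

Definition twisted_poly (C : rawcat) (F : rawfunctor C C)
  (hC : additive C) (hF : automorphism F) : rawcat :=
  polycat (additive_preadditive hC) (automorphism_additive hF).

Definition istar (C : rawcat) (F : rawfunctor C C)
  (hC : additive C) (hF : automorphism F) (M : rawmodule (twisted_poly hC hF)) :
  rawmodule C := restrict M.

(* Main.v *)
Require Import Defs.
From mathcomp Require Import all_boot.
From mathcomp Require Import zify.
From Stdlib Require Import ProofIrrelevance FunctionalExtensionality IndefiniteDescription.
Set Implicit Arguments. Unset Strict Implicit. Unset Printing Implicit Defensive.
Local Notation comp := Defs.comp.

Section Sums.
Variables (T : Type) (z : T) (a : T -> T -> T) (o : T -> T).
Hypothesis hg : abgroup_laws z a o.

Definition gsum (I : Type) (s : seq I) (f : I -> T) :=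
  foldr (fun i acc => a (f i) acc) z s.

Lemma aA x y w : a x (a y w) = a (a x y) w. Proof. by case: hg. Qed.
Lemma aC x y : a x y = a y x. Proof. by case: hg. Qed.
Lemma a0 x : a z x = x. Proof. by case: hg. Qed.
Lemma a0r x : a x z = x. Proof. by rewrite aC a0. Qed.
Lemma aN x : a (o x) x = z. Proof. by case: hg. Qed.
Lemma aNr x : a x (o x) = z. Proof. by rewrite aC aN. Qed.
Lemma acancel x y y' : a x y = a x y' -> y = y'.
Proof. move=> h; have := congr1 (a (o x)) h; by rewrite !aA aN !a0. Qed.
Lemma a_eq0 x y : a x y = z -> y = o x.
Proof. move=> h; apply: (@acancel x); by rewrite h aNr. Qed.
Lemma oK x : o (o x) = x.
Proof. apply: (@acancel (o x)); by rewrite aN aNr. Qed.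
Lemma o0 : o z = z. Proof. by rewrite -(a0 (o z)) aNr. Qed.
Lemma oD x y : o (a x y) = a (o x) (o y).
Proof.
apply: (@acancel (a x y)); rewrite aNr.
rewrite [a (o x) _]aC aA -[a (a x y) _]aA aNr a0r aNr //.
Qed.
Lemma acancel_r x y y' : a y x = a y' x -> y = y'.
Proof. by rewrite ![a _ x]aC; apply: acancel. Qed.
Lemma sub_eq0 x y : a x (o y) = z -> x = y.
Proof. move/a_eq0=> h; by rewrite -(oK x) -h oK. Qed.

Lemma gsum_cat I (s t : seq I) f : gsum (s ++ t) f = a (gsum s f) (gsum t f).
Proof. elim: s => [|i s IH] /=; first by rewrite a0. by rewrite IH aA. Qed.

Lemma gsum_split I (s : seq I) f g :
  gsum s (fun i => a (f i) (g i)) = a (gsum s f) (gsum s g).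
Proof.
elim: s => [|i s IH] /=; first by rewrite a0.
rewrite IH !aA; congr (a _ _); rewrite -!aA; congr (a _ _); exact: aC.
Qed.

Lemma gsum_opp I (s : seq I) f : gsum s (fun i => o (f i)) = o (gsum s f).
Proof. elim: s => [|i s IH] /=; first by rewrite o0. by rewrite IH oD. Qed.

Lemma gsum0 I (s : seq I) f : (forall i, f i = z) -> gsum s f = z.
Proof. move=> h; elim: s => //= i s ->; by rewrite h a0. Qed.

Lemma gsum_eq I (s : seq I) f g : (forall i, f i = g i) -> gsum s f = gsum s g.
Proof. move=> h; elim: s => //= i s ->; by rewrite h. Qed.

Lemma gsum0_in (I : eqType) (s : seq I) f : {in s, forall i, f i = z} -> gsum s f = z.
Proof.
elim: s => //= i s IH h; rewrite h ?mem_head // a0 IH // => j js.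
by apply: h; rewrite in_cons js orbT.
Qed.

Lemma gsum_eq_in (I : eqType) (s : seq I) f g : {in s, forall i, f i = g i} ->
  gsum s f = gsum s g.
Proof.
elim: s => //= i s IH h; rewrite h ?mem_head // IH // => j js.
by apply: h; rewrite in_cons js orbT.
Qed.

Lemma gsum_single (I : eqType) (s : seq I) f i0 : uniq s -> i0 \in s ->
  (forall i, i != i0 -> f i = z) -> gsum s f = f i0.
Proof.
elim: s => //= i s IH /andP[ni us]; rewrite in_cons => /orP[/eqP->|iis] h.
  rewrite gsum0_in ?a0r // => j js; apply: h; apply/eqP=> ej.
  by move: ni; rewrite -ej js.
rewrite IH // h ?a0 //; apply/eqP=> ei; by move: ni; rewrite ei iis.
Qed.

Lemma gsum_exch I J (s : seq I) (t : seq J) (f : I -> J -> T) :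
  gsum s (fun i => gsum t (f i)) = gsum t (fun j => gsum s (f^~ j)).
Proof.
elim: s => [|i s IH] /=; first by rewrite gsum0.
by rewrite IH -gsum_split.
Qed.

End Sums.

Lemma gsum_morph (T T' : Type) (z : T) (a : T -> T -> T) (z' : T') (a' : T' -> T' -> T')
  (phi : T -> T') : phi z = z' -> (forall x y, phi (a x y) = a' (phi x) (phi y)) ->
  forall I (s : seq I) f, phi (gsum z a s f) = gsum z' a' s (fun i => phi (f i)).
Proof. move=> h0 hD I s f; elim: s => //= i s <-; by rewrite hD. Qed.

Lemma gsum_iota_ext (T : Type) (z : T) (a : T -> T -> T) (o : T -> T) :
  abgroup_laws z a o -> forall (f : nat -> T) (N N' : nat),
  (forall k, N <= k -> f k = z) -> N <= N' ->
  gsum z a (iota 0 N') f = gsum z a (iota 0 N) f.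
Proof.
move=> hg f N N' hf le; rewrite -(subnKC le) iotaD (gsum_cat hg).
have -> : gsum z a (iota (0 + N) (N' - N)) f = z.
  by apply: (gsum0_in hg) => k; rewrite mem_iota => /andP[h _]; apply: hf; lia.
by rewrite (a0r hg).
Qed.

Section Casts.
Variable C : rawcat.

Definition castM (X X' Y Y' : Ob C) (e1 : X = X') (e2 : Y = Y') (f : Hom X Y) : Hom X' Y' :=
  eq_rect Y (fun Z => Hom X' Z) (eq_rect X (fun Z => Hom Z Y) f X' e1) Y' e2.

Lemma castD_irr (X X' Y : Ob C) (e1 e2 : X = X') (f : Hom X Y) : castD e1 f = castD e2 f.
Proof. by rewrite (proof_irrelevance _ e1 e2). Qed.
Lemma castD_id (X Y : Ob C) (e : X = X) (f : Hom X Y) : castD e f = f.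
Proof. by rewrite (proof_irrelevance _ e erefl). Qed.
Lemma castDK (X X' X'' Y : Ob C) (e1 : X = X') (e2 : X' = X'') (f : Hom X Y) :
  castD e2 (castD e1 f) = castD (etrans e1 e2) f.
Proof. by case: X'' / e2. Qed.
Lemma castD_add (X X' Y : Ob C) (e : X = X') (f g : Hom X Y) :
  castD e (hadd f g) = hadd (castD e f) (castD e g).
Proof. by case: X' / e. Qed.
Lemma comp_castD (X X' Y Z : Ob C) (e : X = X') (g : Hom Y Z) (f : Hom X Y) :
  comp g (castD e f) = castD e (comp g f).
Proof. by case: X' / e. Qed.
Lemma castM_id (X Y : Ob C) (e1 : X = X) (e2 : Y = Y) (f : Hom X Y) : castM e1 e2 f = f.
Proof. by rewrite (proof_irrelevance _ e1 erefl) (proof_irrelevance _ e2 erefl). Qed.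
Lemma castMK (X X' X'' Y Y' Y'' : Ob C) (e1 : X = X') (e2 : Y = Y') (e1' : X' = X'') (e2' : Y' = Y'') (f : Hom X Y) :
  castM e1' e2' (castM e1 e2 f) = castM (etrans e1 e1') (etrans e2 e2') f.
Proof. by subst. Qed.
Lemma castM_comp (X X' Y Y' Z Z' : Ob C) (e1 : X = X') (e2 : Y = Y') (e3 : Z = Z') (g : Hom Y Z) (f : Hom X Y) :
  castM e1 e3 (comp g f) = comp (castM e2 e3 g) (castM e1 e2 f).
Proof. by subst. Qed.
Lemma castM_add (X X' Y Y' : Ob C) (e1 : X = X') (e2 : Y = Y') (f g : Hom X Y) :
  castM e1 e2 (hadd f g) = hadd (castM e1 e2 f) (castM e1 e2 g).
Proof. by subst. Qed.
Lemma castM_idm (X X' : Ob C) (e1 e2 : X = X') : castM e1 e2 (idm X) = idm X'.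
Proof. rewrite (proof_irrelevance _ e2 e1); by subst. Qed.
Lemma castM_castD (X X' Y : Ob C) (e : X = X') (e2 : Y = Y) (f : Hom X Y) : castM e e2 f = castD e f.
Proof. rewrite (proof_irrelevance _ e2 erefl); by subst. Qed.

Definition mcast (M : rawmodule C) (X Y : Ob C) (e : X = Y) (x : mob M X) : mob M Y :=
  eq_rect X (mob M) x Y e.

Lemma mcast_irr (M : rawmodule C) (X Y : Ob C) (e1 e2 : X = Y) (x : mob M X) :
  mcast e1 x = mcast e2 x.
Proof. by rewrite (proof_irrelevance _ e1 e2). Qed.
Lemma mcast_id (M : rawmodule C) (X : Ob C) (e : X = X) (x : mob M X) : mcast e x = x.
Proof. by rewrite (proof_irrelevance _ e erefl). Qed.
Lemma mcastK (M : rawmodule C) (X Y Z : Ob C) (e1 : X = Y) (e2 : Y = Z) (x : mob M X) :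
  mcast e2 (mcast e1 x) = mcast (etrans e1 e2) x.
Proof. by case: Z / e2. Qed.
Lemma mcast_add (M : rawmodule C) (X Y : Ob C) (e : X = Y) (x y : mob M X) :
  mcast e (madd M x y) = madd M (mcast e x) (mcast e y).
Proof. by case: Y / e. Qed.
Lemma mcast_opp (M : rawmodule C) (X Y : Ob C) (e : X = Y) (x : mob M X) :
  mcast e (mopp M x) = mopp M (mcast e x).
Proof. by case: Y / e. Qed.
Lemma mcast_zero (M : rawmodule C) (X Y : Ob C) (e : X = Y) :
  mcast e (mzero M X) = mzero M Y.
Proof. by case: Y / e. Qed.
Lemma mcast_inj (M : rawmodule C) (X Y : Ob C) (e : X = Y) (x y : mob M X) :
  mcast e x = mcast e y -> x = y.
Proof. by case: Y / e. Qed.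
Lemma mact_castD (M : rawmodule C) (X X' Y : Ob C) (e : X = X') (f : Hom X Y) (y : mob M Y) :
  mact M (castD e f) y = mcast e (mact M f y).
Proof. by case: X' / e. Qed.
Lemma mact_castM (M : rawmodule C) (X X' Y Y' : Ob C) (e1 : X = X') (e2 : Y = Y') (f : Hom X Y) (y : mob M Y') :
  mact M (castM e1 e2 f) y = mcast e1 (mact M f (mcast (esym e2) y)).
Proof. by subst. Qed.
Lemma hom_mcast (M N : rawmodule C) (h : modmap M N) (X Y : Ob C) (e : X = Y) (x : mob M X) :
  h Y (mcast e x) = mcast e (h X x).
Proof. by case: Y / e. Qed.

End Casts.

Section ModBasics.
Variables (C : rawcat) (M : module C).
Let hl := mlaws M.
Lemma mgrp X : abgroup_laws (mzero M X) (@madd C M X) (@mopp C M X).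
Proof. by case: hl. Qed.
Lemma mact_add (X Y : Ob C) (f : Hom X Y) (x y : mob M Y) :
  mact M f (madd M x y) = madd M (mact M f x) (mact M f y).
Proof. by case: hl. Qed.
Lemma mact_hadd (X Y : Ob C) (f g : Hom X Y) (x : mob M Y) :
  mact M (hadd f g) x = madd M (mact M f x) (mact M g x).
Proof. by case: hl. Qed.
Lemma mact_id (X : Ob C) (x : mob M X) : mact M (idm X) x = x.
Proof. by case: hl. Qed.
Lemma mact_comp (X Y Z : Ob C) (g : Hom Y Z) (f : Hom X Y) (x : mob M Z) :
  mact M (comp g f) x = mact M f (mact M g x).
Proof. by case: hl. Qed.
Lemma mact0 (X Y : Ob C) (f : Hom X Y) : mact M f (mzero M Y) = mzero M X.
Proof.
apply: (abg_idem (mgrp X)); by rewrite -mact_add (a0 (mgrp Y)).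
Qed.
Lemma mact_opp (X Y : Ob C) (f : Hom X Y) (x : mob M Y) :
  mact M f (mopp M x) = mopp M (mact M f x).
Proof.
apply: (a_eq0 (mgrp X)); by rewrite -mact_add (aNr (mgrp Y)) mact0.
Qed.
Lemma mact_hzero (X Y : Ob C) (x : mob M Y) (h0 : hadd (@hzero C X Y) hzero = hzero) :
  mact M hzero x = mzero M X.
Proof. apply: (abg_idem (mgrp X)); by rewrite -mact_hadd h0. Qed.
Lemma mact_gsum (X Y : Ob C) (f : Hom X Y) I (s : seq I) (g : I -> mob M Y) :
  mact M f (gsum (mzero M Y) (@madd C M Y) s g) = gsum (mzero M X) (@madd C M X) s (fun i => mact M f (g i)).
Proof. apply: gsum_morph; [exact: mact0 | exact: mact_add]. Qed.
End ModBasics.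

Section HomBasics.
Variables (C : rawcat) (M N : module C).
Unset Implicit Arguments.
Variable (h : modmap M N).
Set Implicit Arguments.
Hypothesis hh : is_modhom h.
Lemma hom_add X (x y : mob M X) : h X (madd M x y) = madd N (h X x) (h X y).
Proof. by case: hh. Qed.
Lemma hom_act (X Y : Ob C) (f : Hom X Y) (x : mob M Y) : h X (mact M f x) = mact N f (h Y x).
Proof. by case: hh. Qed.
Lemma hom0 X : h X (mzero M X) = mzero N X.
Proof. apply: (abg_idem (mgrp N X)); by rewrite -hom_add (a0 (mgrp M X)). Qed.
Lemma hom_opp X (x : mob M X) : h X (mopp M x) = mopp N (h X x).
Proof. apply: (a_eq0 (mgrp N X)); by rewrite -hom_add (aNr (mgrp M X)) hom0. Qed.
Lemma hom_gsum X I (s : seq I) (g : I -> mob M X) :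
  h X (gsum (mzero M X) (@madd C M X) s g) = gsum (mzero N X) (@madd C N X) s (fun i => h X (g i)).
Proof. apply: gsum_morph; [exact: hom0 | exact: hom_add]. Qed.
End HomBasics.

Lemma castM_irr (C : rawcat) (X X' Y Y' : Ob C) (e1 e1' : X = X') (e2 e2' : Y = Y') (f : Hom X Y) :
  castM e1 e2 f = castM e1' e2' f.
Proof. by rewrite (proof_irrelevance _ e1 e1') (proof_irrelevance _ e2 e2'). Qed.

Section PolyLemmas.
Variables (C : rawcat) (F : rawfunctor C C) (hC : preadditive C) (hF : additive_functor F).
Local Notation Fo := (fobj F).
Local Notation B := (polycat hC hF).

Lemma hgrp (X Y : Ob C) : abgroup_laws (@hzero C X Y) hadd hopp. Proof. by case: hC. Qed.
Lemma compA (W X Y Z : Ob C) (h : Hom Y Z) (g : Hom X Y) (f : Hom W X) :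
  comp h (comp g f) = comp (comp h g) f. Proof. by case: hC. Qed.
Lemma comp1l (X Y : Ob C) (f : Hom X Y) : comp (idm Y) f = f. Proof. by case: hC => _ _ /(_ X Y f) []. Qed.
Lemma comp1r (X Y : Ob C) (f : Hom X Y) : comp f (idm X) = f. Proof. by case: hC => _ _ /(_ X Y f) []. Qed.
Lemma compDl (X Y Z : Ob C) (g g' : Hom Y Z) (f : Hom X Y) :
  comp (hadd g g') f = hadd (comp g f) (comp g' f). Proof. by case: hC. Qed.
Lemma compDr (X Y Z : Ob C) (g : Hom Y Z) (f f' : Hom X Y) :
  comp g (hadd f f') = hadd (comp g f) (comp g f'). Proof. by case: hC. Qed.
Lemma fmap_id (X : Ob C) : fmap F (idm X) = idm (Fo X). Proof. by case: hF. Qed.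
Lemma fmap_comp (X Y Z : Ob C) (g : Hom Y Z) (f : Hom X Y) :
  fmap F (comp g f) = comp (fmap F g) (fmap F f). Proof. by case: hF. Qed.
Lemma fmap_add (X Y : Ob C) (f f' : Hom X Y) : fmap F (hadd f f') = hadd (fmap F f) (fmap F f').
Proof. by case: hF. Qed.

Lemma powM_comp k (X Y Z : Ob C) (g : Hom Y Z) (f : Hom X Y) :
  powM F k (comp g f) = comp (powM F k g) (powM F k f).
Proof. by elim: k => //= k ->; rewrite fmap_comp. Qed.
Lemma powM_add k (X Y : Ob C) (f f' : Hom X Y) :
  powM F k (hadd f f') = hadd (powM F k f) (powM F k f').
Proof. by elim: k => //= k ->; rewrite fmap_add. Qed.
Lemma powM_id k (X : Ob C) : powM F k (idm X) = idm _.
Proof. by elim: k => //= k ->; rewrite fmap_id. Qed.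
Lemma powM_castD k (X X' Y : Ob C) (e : X = X') (f : Hom X Y) :
  powM F k (castD e f) = castD (congr1 (iter k Fo) e) (powM F k f).
Proof. by subst. Qed.
Lemma fmap_castM (X X' Y Y' : Ob C) (e1 : X = X') (e2 : Y = Y') (f : Hom X Y) :
  fmap F (castM e1 e2 f) = castM (congr1 Fo e1) (congr1 Fo e2) (fmap F f).
Proof. by subst. Qed.
Lemma powM_castM k (X X' Y Y' : Ob C) (e1 : X = X') (e2 : Y = Y') (f : Hom X Y) :
  powM F k (castM e1 e2 f) = castM (congr1 (iter k Fo) e1) (congr1 (iter k Fo) e2) (powM F k f).
Proof. by subst. Qed.

Definition itE m j (X : Ob C) : iter m Fo (iter j Fo X) = iter (m + j) Fo X :=
  esym (iterD m j Fo X).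

Lemma powM_iterD m j (X Y : Ob C) (f : Hom X Y) :
  powM F (m + j) f = castM (itE m j X) (itE m j Y) (powM F m (powM F j f)).
Proof.
elim: m => [|m IH]; first by rewrite castM_id.
change (fmap F (powM F (m + j) f) = castM (itE m.+1 j X) (itE m.+1 j Y) (fmap F (powM F m (powM F j f)))).
rewrite IH fmap_castM; exact: castM_irr.
Qed.

Definition monoc (X Y : Ob C) j (g : Hom (iter j Fo X) Y) (k : nat) : Hom (iter k Fo X) Y :=
  match j =P k with
  | ReflectT e => castD (congr1 (fun m => iter m Fo X) e) g
  | ReflectF _ => hzero end.

Lemma monoc_supp (X Y : Ob C) j (g : Hom (iter j Fo X) Y) : fsupp (monoc g).
Proof.
exists j.+1 => k hk; rewrite /monoc; case: eqP => // e; exfalso; lia.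
Qed.

Definition mono (X Y : Ob C) j (g : Hom (iter j Fo X) Y) : Hom (X : Ob B) Y :=
  exist _ (monoc g) (monoc_supp g).

Lemma mono_coef (X Y : Ob C) j (g : Hom (iter j Fo X) Y) k (e : iter j Fo X = iter k Fo X) :
  j = k -> monoc g k = castD e g.
Proof.
move=> ejk; rewrite /monoc; case: eqP => [e'|//]; exact: castD_irr.
Qed.
Lemma mono_coef_same (X Y : Ob C) j (g : Hom (iter j Fo X) Y) : monoc g j = g.
Proof. by rewrite (@mono_coef _ _ _ _ _ erefl) //. Qed.
Lemma mono_coef0 (X Y : Ob C) j (g : Hom (iter j Fo X) Y) k : j <> k -> monoc g k = hzero.
Proof. move=> ne; rewrite /monoc; by case: eqP. Qed.

Lemma phom_ext (X Y : Ob C) (f g : Hom (X : Ob B) Y) : (forall k, sval f k = sval g k) -> f = g.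
Proof.
case: f g => [f hf] [g hg] /= h.
have efg : f = g by apply: functional_extensionality_dep.
subst; by rewrite (proof_irrelevance _ hf hg).
Qed.

Lemma pmono0_mono (X Y : Ob C) (f : Hom X Y) : pmono0 F f = mono (j:=0) f.
Proof.
apply: phom_ext => -[|k] /=; first by rewrite mono_coef_same.
by rewrite mono_coef0.
Qed.

Lemma mono_add (X Y : Ob C) j (g g' : Hom (iter j Fo X) Y) :
  @hadd B X Y (mono g) (mono g') = mono (hadd g g').
Proof.
apply: phom_ext => k /=; rewrite /monoc; case: eqP => [e|_]; first by rewrite castD_add.
exact: add00.
Qed.

Lemma mono_zero (X Y : Ob C) j : mono (j:=j) (@hzero C (iter j Fo X) Y) = hzero.
Proof. apply: phom_ext => k /=; rewrite /monoc; case: eqP => // e; exact: castD0. Qed.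

Lemma pcoefE (X Y Z : Ob C) (g : forall j, Hom (iter j Fo Y) Z) (f : forall k, Hom (iter k Fo X) Y) n :
  pcoef g f n = gsum hzero hadd (enum 'I_n.+1)
     (fun j : 'I_n.+1 => castD (iter_split F j X) (comp (g j) (powM F j (f (n - j))))).
Proof. by []. Qed.

Lemma pcoef_eq0 (X Y Z : Ob C) (g : forall j, Hom (iter j Fo Y) Z) (f : forall k, Hom (iter k Fo X) Y) n :
  (forall j : 'I_n.+1, comp (g j) (powM F j (f (n - j))) = hzero) -> pcoef g f n = hzero.
Proof.
move=> h; rewrite /pcoef; elim: (enum _) => //= j s ->; by rewrite h castD0 add00.
Qed.

Lemma pcomp_mono (X Y Z : Ob C) j i (g : Hom (iter j Fo Y) Z) (f : Hom (iter i Fo X) Y) n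
  (e : iter j Fo (iter i Fo X) = iter n Fo X) :
  n = j + i -> Defs.pcomp hC hF (mono g) (mono f) = mono (castD e (comp g (powM F j f))).
Proof.
move=> en; apply: phom_ext => k /=.
have [ekn|nkn] := eqVneq k n.
  subst k.
  have jlt : j < n.+1 by lia.
  rewrite pcoefE (gsum_single (hgrp _ _) (i0 := Ordinal jlt)) ?enum_uniq ?mem_enum //.
    rewrite /=.
    rewrite mono_coef_same (@mono_coef _ _ _ _ _ (congr1 (fun m => iter m Fo X) (etrans (esym (addKn j i)) (congr1 (subn^~ j) (esym en))))); last by lia.
    rewrite powM_castD comp_castD castDK (@mono_coef _ _ _ _ _ erefl) // castD_id; exact: castD_irr.
  move=> j' nj; rewrite mono_coef0 ?comp0l ?castD0 //.
  move=> ej; have hj : j' = Ordinal jlt by apply/val_inj; rewrite /= -ej.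
  by rewrite hj eqxx in nj.
rewrite [RHS]mono_coef0; last by move=> e'; rewrite e' eqxx in nkn.
apply: pcoef_eq0 => j' /=.
have [ej|nej] := eqVneq (val j') j.
  rewrite (mono_coef0 (j:=i)) ?powM0 ?comp0r //.
  move=> ei; apply/(negP nkn)/eqP; have ej' : nat_of_ord j' = j := ej; have := ltn_ord j'; lia.
rewrite (@mono_coef0 _ _ _ g j'); first by rewrite comp0l.
by move=> h; rewrite h eqxx in nej.
Qed.

End PolyLemmas.

Section PolySums.
Variables (C : rawcat) (F : rawfunctor C C) (hC : preadditive C) (hF : additive_functor F).
Local Notation Fo := (fobj F).
Local Notation B := (polycat hC hF).
Local Notation pc := (Defs.pcomp hC hF).

Definition psum (X Y : Ob C) I (s : seq I) (f : I -> Hom (X : Ob B) Y) : Hom (X : Ob B) Y :=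
  gsum (pzero F X Y) (padd hC (X:=X) (Y:=Y)) s f.

Lemma psum_coef (X Y : Ob C) I (s : seq I) (f : I -> Hom (X : Ob B) Y) k :
  sval (psum s f) k = gsum hzero hadd s (fun i => sval (f i) k).
Proof. by apply: (gsum_morph (phi := fun g : Hom (X : Ob B) Y => sval g k)). Qed.

Lemma mono_decomp (X Y : Ob C) (g : Hom (X : Ob B) Y) :
  exists N, g = psum (iota 0 N) (fun j => mono hC hF (sval g j)).
Proof.
case: g => g [N hN]; exists N; apply: phom_ext => k; rewrite psum_coef /=.
have [lt|ge] := ltnP k N.
  rewrite (gsum_single (hgrp hC _ _) (i0 := k)) ?iota_uniq ?mem_iota //=.
    by rewrite mono_coef_same.
  by move=> j nj; rewrite mono_coef0 //; move=> ej; rewrite ej eqxx in nj.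
rewrite hN // (gsum0_in (hgrp hC _ _)) // => j; rewrite mem_iota => /andP[_ jl].
rewrite mono_coef0 //; lia.
Qed.

Lemma padd00 (X Y : Ob C) : padd hC (pzero F X Y) (pzero F X Y) = pzero F X Y.
Proof. apply: phom_ext => k /=; exact: add00. Qed.

Lemma pcomp_addl (X Y Z : Ob C) (g g' : Hom (Y : Ob B) Z) (f : Hom (X : Ob B) Y) :
  pc (padd hC g g') f = padd hC (pc g f) (pc g' f).
Proof.
apply: phom_ext => k /=; rewrite !pcoefE -(gsum_split (hgrp hC _ _)); apply: gsum_eq => j.
by rewrite (compDl hC) castD_add.
Qed.
Lemma pcomp_addr (X Y Z : Ob C) (g : Hom (Y : Ob B) Z) (f f' : Hom (X : Ob B) Y) :
  pc g (padd hC f f') = padd hC (pc g f) (pc g f').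
Proof.
apply: phom_ext => k /=; rewrite !pcoefE -(gsum_split (hgrp hC _ _)); apply: gsum_eq => j.
by rewrite (powM_add hF) (compDr hC) castD_add.
Qed.
Lemma pcomp_0l (X Y Z : Ob C) (f : Hom (X : Ob B) Y) : pc (pzero F Y Z) f = pzero F X Z.
Proof. apply: phom_ext => k /=; apply: (pcoef_eq0 hC) => j; exact: (comp0l hC). Qed.
Lemma pcomp_0r (X Y Z : Ob C) (g : Hom (Y : Ob B) Z) : pc g (pzero F X Y) = pzero F X Z.
Proof. apply: phom_ext => k /=; apply: (pcoef_eq0 hC) => j; by rewrite (powM0 hC hF) (comp0r hC). Qed.

Lemma pcomp_psuml (X Y Z : Ob C) I (s : seq I) (G : I -> Hom (Y : Ob B) Z) (f : Hom (X : Ob B) Y) :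
  pc (psum s G) f = psum s (fun i => pc (G i) f).
Proof. elim: s => [|i s IH] /=; first exact: pcomp_0l. by rewrite pcomp_addl IH. Qed.
Lemma pcomp_psumr (X Y Z : Ob C) I (s : seq I) (g : Hom (Y : Ob B) Z) (G : I -> Hom (X : Ob B) Y) :
  pc g (psum s G) = psum s (fun i => pc g (G i)).
Proof. elim: s => [|i s IH] /=; first exact: pcomp_0r. by rewrite pcomp_addr IH. Qed.

Section ModB.
Variable M : module B.
Lemma mactB0 (X Y : Ob C) (x : mob M Y) : mact M (pzero F X Y) x = mzero M X.
Proof. apply: (mact_hzero (M:=M)); exact: padd00. Qed.
Lemma mact_psum (X Y : Ob C) I (s : seq I) (f : I -> Hom (X : Ob B) Y) (x : mob M Y) :
  mact M (psum s f) x = gsum (mzero M X) (@madd B M X) s (fun i => mact M (f i) x).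
Proof.
elim: s => [|i s IH] /=; first exact: mactB0.
by rewrite (mact_hadd (M:=M)) IH.
Qed.
End ModB.

End PolySums.

Section Ind.
Variables (C : rawcat) (F : rawfunctor C C) (hC : preadditive C) (hF : additive_functor F).
Variable Q : module C.
Local Notation Fo := (fobj F).
Local Notation B := (polycat hC hF).
Local Notation pc := (Defs.pcomp hC hF).

Definition indsupp (X : Ob C) (b : forall k, mob Q (iter k Fo X)) :=
  exists N, forall k, N <= k -> b k = mzero Q _.
Definition indT (X : Ob C) := {b : forall k, mob Q (iter k Fo X) | indsupp b}.

Lemma ind_ext (X : Ob C) (b b' : indT X) : (forall k, sval b k = sval b' k) -> b = b'.
Proof.
case: b b' => [b hb] [b' hb'] /= h.
have e : b = b' by apply: functional_extensionality_dep.
subst; by rewrite (proof_irrelevance _ hb hb').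
Qed.

Local Notation QG := (mgrp Q).

Definition izero (X : Ob C) : indT X :=
  exist _ (fun k => mzero Q _) (ex_intro _ 0 (fun _ _ => erefl)).

Definition iadd (X : Ob C) (b b' : indT X) : indT X.
Proof.
exists (fun k => madd Q (sval b k) (sval b' k)).
case: b b' => b [N hN] [b' [N' hN']] /=; exists (maxn N N') => k hk.
rewrite hN ?hN' ?(a0 (QG _)) //; lia.
Defined.

Definition iopp (X : Ob C) (b : indT X) : indT X.
Proof.
exists (fun k => mopp Q (sval b k)).
case: b => b [N hN] /=; exists N => k hk; by rewrite hN // (o0 (QG _)).
Defined.

Lemma iact_supp (X' X : Ob C) (g : Hom (X' : Ob B) X) (b : indT X) :
  indsupp (fun n => gsum (mzero Q _) (@madd C Q _) (enum 'I_n.+1)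
     (fun k : 'I_n.+1 => mcast (iter_split F k X') (mact Q (powM F k (sval g (n - k))) (sval b k)))).
Proof.
case: g => g [Ng hg]; case: b => b [Nb hb] /=.
exists (Ng + Nb) => n hn; apply: (gsum0 (QG _)) => k.
have [lt|ge] := ltnP k Nb.
  rewrite hg; last by have := ltn_ord k; lia.
  by rewrite (powM0 hC hF) mact_hzero ?(add00 hC) // mcast_zero.
by rewrite hb // mact0 mcast_zero.
Qed.

Definition iact (X' X : Ob C) (g : Hom (X' : Ob B) X) (b : indT X) : indT X' :=
  exist _ _ (iact_supp g b).

Definition indraw : rawmodule B :=
  @RawModule B indT izero iadd iopp iact.

Lemma ind_grp (X : Ob C) : abgroup_laws (izero X) (@iadd X) (@iopp X).
Proof.
split.
- by move=> x y w; apply: ind_ext => k /=; rewrite (aA (QG _)).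
- by move=> x y; apply: ind_ext => k /=; rewrite (aC (QG _)).
- by move=> x; apply: ind_ext => k /=; rewrite (a0 (QG _)).
- by move=> x; apply: ind_ext => k /=; rewrite (aN (QG _)).
Qed.

Lemma isum_coef (X : Ob C) I (s : seq I) (f : I -> indT X) k :
  sval (gsum (izero X) (@iadd X) s f) k = gsum (mzero Q _) (@madd C Q _) s (fun i => sval (f i) k).
Proof. by apply: (gsum_morph (phi := fun b : indT X => sval b k)). Qed.

Definition singc (X : Ob C) m (q : mob Q (iter m Fo X)) (k : nat) : mob Q (iter k Fo X) :=
  match m =P k with
  | ReflectT e => mcast (congr1 (fun j => iter j Fo X) e) q
  | ReflectF _ => mzero Q _ end.
Lemma singc_supp (X : Ob C) m (q : mob Q (iter m Fo X)) : indsupp (singc q).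
Proof. exists m.+1 => k hk; rewrite /singc; case: eqP => // e; exfalso; lia. Qed.
Definition single (X : Ob C) m (q : mob Q (iter m Fo X)) : indT X := exist _ _ (singc_supp q).

Lemma singc_eq (X : Ob C) m (q : mob Q (iter m Fo X)) k (e : iter m Fo X = iter k Fo X) :
  m = k -> singc q k = mcast e q.
Proof. move=> ek; rewrite /singc; case: eqP => // e'; exact: mcast_irr. Qed.
Lemma singc_same (X : Ob C) m (q : mob Q (iter m Fo X)) : singc q m = q.
Proof. by rewrite (@singc_eq _ _ _ _ erefl). Qed.
Lemma singc0 (X : Ob C) m (q : mob Q (iter m Fo X)) k : m <> k -> singc q k = mzero Q _.
Proof. move=> ne; rewrite /singc; by case: eqP. Qed.

Lemma single_cast (X : Ob C) m n (q : mob Q (iter m Fo X)) (e : iter m Fo X = iter n Fo X) :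
  m = n -> single q = single (mcast e q).
Proof.
move=> emn; subst n; by rewrite mcast_id.
Qed.

Lemma single_add (X : Ob C) m (q q' : mob Q (iter m Fo X)) :
  iadd (single q) (single q') = single (madd Q q q').
Proof.
apply: ind_ext => k /=; rewrite /singc; case: eqP => [e|_]; first by rewrite mcast_add.
exact: (a0 (QG _)).
Qed.

Lemma decomp (X : Ob C) (b : indT X) :
  exists N, b = gsum (izero X) (@iadd X) (iota 0 N) (fun k => single (sval b k)).
Proof.
case: b => b [N hN]; exists N; apply: ind_ext => k; rewrite isum_coef /=.
have [lt|ge] := ltnP k N.
  rewrite (gsum_single (QG _) (i0 := k)) ?iota_uniq ?mem_iota //=.
    by rewrite singc_same.
  by move=> j nj; rewrite singc0 //; move=> ej; rewrite ej eqxx in nj.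
rewrite hN // (gsum0_in (QG _)) // => j; rewrite mem_iota => /andP[_ jl].
rewrite singc0 //; lia.
Qed.

Lemma iact_mono_single (X' X : Ob C) j (g : Hom (iter j Fo X') X) m (q : mob Q (iter m Fo X))
  n (e : iter m Fo (iter j Fo X') = iter n Fo X') :
  n = m + j -> iact (mono hC hF g) (single q) = single (mcast e (mact Q (powM F m g) q)).
Proof.
move=> en; apply: ind_ext => p /=.
have [epn|npn] := eqVneq p n.
  subst p.
  have mlt : m < n.+1 by lia.
  rewrite (gsum_single (QG _) (i0 := Ordinal mlt)) ?enum_uniq ?mem_enum //=.
    rewrite singc_same singc_same.
    rewrite (@mono_coef _ _ _ _ _ g _ (congr1 (fun p => iter p Fo X') (etrans (esym (addKn m j)) (congr1 (subn^~ m) (esym en))))); last by lia.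
    rewrite powM_castD mact_castD mcastK; exact: mcast_irr.
  move=> k nk; rewrite singc0 ?mact0 ?mcast_zero //.
  move=> ek; have hk : k = Ordinal mlt by apply/val_inj; rewrite /= -ek.
  by rewrite hk eqxx in nk.
rewrite [RHS]singc0; last by move=> e'; rewrite e' eqxx in npn.
apply: (gsum0 (QG _)) => k.
have [ek|nek] := eqVneq (val k) m.
  rewrite (@mono_coef0 _ _ _ _ j g) ?(powM0 hC hF) ?mact_hzero ?(add00 hC) ?mcast_zero //.
  move=> ej; apply/(negP npn)/eqP; have ek' : nat_of_ord k = m := ek; have := ltn_ord k; lia.
rewrite singc0 ?mact0 ?mcast_zero //.
by move=> h; rewrite h eqxx in nek.
Qed.

End Ind.

Section IndLaws.
Variables (C : rawcat) (F : rawfunctor C C) (hC : preadditive C) (hF : additive_functor F).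
Variable Q : module C.
Local Notation Fo := (fobj F).
Local Notation B := (polycat hC hF).
Local Notation pc := (Defs.pcomp hC hF).
Local Notation QG := (mgrp Q).
Local Notation iT := (indT F Q).
Local Notation IG := (ind_grp F Q).
Local Notation iactB := (@iact _ _ hC hF Q _ _).

Lemma iact_add (X' X : Ob C) (g : Hom (X' : Ob B) X) (b b' : iT X) :
  iactB g (iadd b b') = iadd (iact g b) (iact g b').
Proof.
apply: ind_ext => n /=; rewrite -(gsum_split (QG _)); apply: gsum_eq => k.
by rewrite mact_add mcast_add.
Qed.

Lemma iact_hadd (X' X : Ob C) (g g' : Hom (X' : Ob B) X) (b : iT X) :
  iactB (padd hC g g') b = iadd (iact g b) (iact g' b).
Proof.
apply: ind_ext => n /=; rewrite -(gsum_split (QG _)); apply: gsum_eq => k.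
by rewrite (powM_add hF) mact_hadd mcast_add.
Qed.

Lemma iact_izero (X' X : Ob C) (g : Hom (X' : Ob B) X) : iactB g (izero F Q X) = izero F Q X'.
Proof. apply: (abg_idem (IG X')); by rewrite -iact_add (a0 (IG X)). Qed.

Lemma iact_pzero (X' X : Ob C) (b : iT X) : iactB (pzero F X' X) b = izero F Q X'.
Proof. apply: (abg_idem (IG X')); by rewrite -iact_hadd (padd00 hC). Qed.

Lemma iact_gsum (X' X : Ob C) (g : Hom (X' : Ob B) X) I (s : seq I) (f : I -> iT X) :
  iact g (gsum (izero F Q X) (@iadd _ _ Q X) s f) = gsum (izero F Q X') (@iadd _ _ Q X') s (fun i => iact g (f i)).
Proof. apply: gsum_morph; [exact: iact_izero | exact: iact_add]. Qed.

Lemma iact_psum (X' X : Ob C) I (s : seq I) (G : I -> Hom (X' : Ob B) X) (b : iT X) :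
  iactB (psum s G) b = gsum (izero F Q X') (@iadd _ _ Q X') s (fun i => iact (G i) b).
Proof. elim: s => [|i s IH] /=; first exact: iact_pzero. by rewrite iact_hadd IH. Qed.

Lemma iact_id (X : Ob C) (b : iT X) : iactB (pid F X) b = b.
Proof.
have [N ->] := decomp b.
rewrite iact_gsum; apply: gsum_eq => k.
rewrite /pid (pmono0_mono hC hF) (@iact_mono_single _ _ hC hF Q _ _ 0 _ _ _ k erefl) ?addn0 //.
by rewrite (powM_id hF) mact_id mcast_id.
Qed.

Lemma iact_comp_gen (X'' X' X : Ob C) i j (f : Hom (iter i Fo X'') X') (g : Hom (iter j Fo X') X)
  m (q : mob Q (iter m Fo X)) :
  iactB (pc (mono hC hF g) (mono hC hF f)) (single q) = iactB (mono hC hF f) (iactB (mono hC hF g) (single q)).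
Proof.
rewrite (@pcomp_mono _ _ hC hF _ _ _ _ _ _ _ _ (itE F j i X'')) //.
rewrite (@iact_mono_single _ _ hC hF Q _ _ _ _ _ _ (m + j) (itE F m j X')) //.
rewrite (@iact_mono_single _ _ hC hF Q _ _ _ _ _ _ (m + j + i) (itE F (m + j) i X'')) //.
rewrite (@iact_mono_single _ _ hC hF Q _ _ _ _ _ _ (m + j + i)
   (etrans (itE F m (j + i) X'') (congr1 (fun p => iter p Fo X'') (addnA m j i)))); last by rewrite addnA.
congr single.
rewrite powM_castD (powM_comp hF) mact_castD mact_comp mcastK.
rewrite powM_iterD mact_castM (mcastK (itE F m j X')) mcast_id mcastK.
exact: mcast_irr.
Qed.

Lemma iact_comp (X'' X' X : Ob C) (g : Hom (X' : Ob B) X) (f : Hom (X'' : Ob B) X') (b : iT X) :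
  iactB (pc g f) b = iactB f (iactB g b).
Proof.
have [Ng ->] := mono_decomp g; have [Nf ->] := mono_decomp f; have [Nb ->] := decomp b.
rewrite pcomp_psuml iact_psum.
under gsum_eq => jj do rewrite pcomp_psumr iact_psum.
rewrite iact_psum.
under [RHS]gsum_eq => ii do rewrite iact_psum iact_gsum.
rewrite (gsum_exch (IG _)).
apply: gsum_eq => ii; apply: gsum_eq => jj.
rewrite !iact_gsum; apply: gsum_eq => kk.
exact: iact_comp_gen.
Qed.

Lemma ind_laws : module_laws (indraw hC hF Q).
Proof.
split.
- exact: IG.
- move=> X Y f x y; exact: iact_add.
- move=> X Y f g x; exact: iact_hadd.
- move=> X x; exact: iact_id.
- move=> X Y Z g f x; exact: iact_comp.
Qed.

Definition ind : module B := Module ind_laws.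

End IndLaws.

Section Restrict.
Variables (C : rawcat) (F : rawfunctor C C) (hC : preadditive C) (hF : additive_functor F).
Local Notation Fo := (fobj F).
Local Notation B := (polycat hC hF).
Local Notation pc := (Defs.pcomp hC hF).

Lemma pmono0_comp (X Y Z : Ob C) (g : Hom Y Z) (f : Hom X Y) :
  pmono0 F (comp g f) = pc (pmono0 F g) (pmono0 F f).
Proof.
by rewrite !(pmono0_mono hC hF) (@pcomp_mono _ _ hC hF _ _ _ 0 0 _ _ 0 erefl).
Qed.
Lemma pmono0_add (X Y : Ob C) (f g : Hom X Y) :
  pmono0 F (hadd f g) = padd hC (pmono0 F f) (pmono0 F g).
Proof. by rewrite !(pmono0_mono hC hF) -(mono_add hC hF). Qed.

Variable M : module B.
Lemma restrict_laws : module_laws (restrict M).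
Proof.
split.
- move=> X; exact: (mgrp M X).
- move=> X Y f x y /=; exact: (mact_add (M:=M)).
- move=> X Y f g x /=; by rewrite pmono0_add (mact_hadd (M:=M)).
- move=> X x /=; exact: (mact_id (M:=M)).
- move=> X Y Z g f x /=; by rewrite pmono0_comp (mact_comp (M:=M)).
Qed.
Definition resM : module C := Module restrict_laws.
End Restrict.

Section Ext.
Variables (C : rawcat) (F : rawfunctor C C) (hC : preadditive C) (hF : additive_functor F).
Local Notation Fo := (fobj F).
Local Notation B := (polycat hC hF).
Local Notation pc := (Defs.pcomp hC hF).
Variable Q : module C.
Local Notation IQ := (ind hC hF Q).
Local Notation iactB := (@iact _ _ hC hF Q _ _).
Local Notation IG := (ind_grp F Q).

Lemma ind_hom_gen (M : module B) (h : modmap IQ M) :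
  (forall X (b b' : indT F Q X), h X (iadd b b') = madd M (h X b) (h X b')) ->
  (forall (X' X : Ob C) j (g : Hom (iter j Fo X') X) m (q : mob Q (iter m Fo X)),
      h X' (iactB (mono hC hF g) (single q)) = mact M (mono hC hF g) (h X (single q))) ->
  is_modhom h.
Proof.
move=> hadd' hgen; split => //.
have h0 : forall X, h X (izero F Q X) = mzero M X.
  move=> X; apply: (abg_idem (mgrp M X)); by rewrite -hadd' (a0 (IG X)).
have hs : forall X I (s : seq I) f, h X (gsum (izero F Q X) (@iadd _ _ Q X) s f) =
   gsum (mzero M X) (@madd _ M X) s (fun i => h X (f i)).
  move=> X I s f; by apply: gsum_morph.
move=> X' X g b /=.
have [Ng ->] := mono_decomp g; have [Nb ->] := decomp b.
change (h X' (iactB (psum (iota 0 Ng) (fun j => mono hC hF (sval g j))) (gsum (izero F Q X) (@iadd _ _ Q X) (iota 0 Nb) (fun k => single (sval b k))))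
  = mact M (psum (iota 0 Ng) (fun j => mono hC hF (sval g j))) (h X (gsum (izero F Q X) (@iadd _ _ Q X) (iota 0 Nb) (fun k => single (sval b k))))).
rewrite iact_psum hs mact_psum; apply: gsum_eq => j.
by rewrite iact_gsum hs hs mact_gsum; apply: gsum_eq => k.
Qed.

Definition tk (X : Ob C) k : Hom (X : Ob B) (iter k Fo X) := mono hC hF (j := k) (idm (iter k Fo X)).

Definition castCodB (X W Z : Ob C) (e : W = Z) (u : Hom (X : Ob B) W) : Hom (X : Ob B) Z :=
  eq_rect W (fun Z => Hom (X : Ob B) Z) u Z e.
Definition castCod (X W Z : Ob C) (e : W = Z) (u : Hom X W) : Hom X Z :=
  eq_rect W (fun Z => Hom X Z) u Z e.

Lemma mact_mcastB (M : rawmodule B) (X Z W : Ob C) (e : Z = W) (u : Hom (X : Ob B) W) (z : mob M Z) :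
  mact M u (@mcast C (restrict M) _ _ e z) = mact M (castCodB (esym e) u) z.
Proof. by subst. Qed.
Lemma castCodB_mono (X W Z : Ob C) j (e : W = Z) (h : Hom (iter j Fo X) W) :
  castCodB e (mono hC hF h) = mono hC hF (castCod e h).
Proof. by subst. Qed.
Lemma comp_castCod_id (Y Z W : Ob C) (e : Z = W) (P : Hom Z Y) :
  comp P (castCod (esym e) (idm W)) = castD e P.
Proof. subst => /=; exact: (comp1r hC). Qed.

Variable M : module B.
Local Notation N := (resM M).
Unset Implicit Arguments.
Variable h0 : modmap Q N.
Set Implicit Arguments.
Hypothesis hh0 : is_modhom h0.

Definition bnd (X : Ob C) (b : indT F Q X) : nat :=
  proj1_sig (constructive_indefinite_description _ (proj2_sig b)).
Lemma bndP (X : Ob C) (b : indT F Q X) k : bnd b <= k -> sval b k = mzero Q _.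
Proof. rewrite /bnd; case: constructive_indefinite_description => /= n hn; exact: hn. Qed.

Definition extf (X : Ob C) (b : indT F Q X) (k : nat) : mob M X :=
  mact M (tk X k) (h0 _ (sval b k)).

Definition ext : modmap IQ M := fun X b => gsum (mzero M X) (@madd _ M X) (iota 0 (bnd b)) (extf b).

Lemma extf0 (X : Ob C) (b : indT F Q X) k : sval b k = mzero Q _ -> extf b k = mzero M X.
Proof. move=> h; by rewrite /extf h (hom0 hh0) mact0. Qed.

Lemma ext_any (X : Ob C) (b : indT F Q X) n : (forall k, n <= k -> sval b k = mzero Q _) ->
  ext b = gsum (mzero M X) (@madd _ M X) (iota 0 n) (extf b).
Proof.
move=> hn; rewrite /ext.
rewrite -(@gsum_iota_ext _ _ _ _ (mgrp M X) _ (bnd b) (maxn n (bnd b))); last 2 first.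
- by move=> k hk; apply: extf0; apply: bndP.
- exact: leq_maxr.
rewrite (@gsum_iota_ext _ _ _ _ (mgrp M X) _ n (maxn n (bnd b))) //; last exact: leq_maxl.
by move=> k hk; apply: extf0; apply: hn.
Qed.

Lemma ext_add (X : Ob C) (b b' : indT F Q X) : ext (iadd b b') = madd M (ext b) (ext b').
Proof.
rewrite (@ext_any _ (iadd b b') (maxn (bnd b) (bnd b'))); last first.
  move=> k hk /=; rewrite !bndP ?(a0 (mgrp Q _)) //; lia.
rewrite (@ext_any _ b (maxn (bnd b) (bnd b'))); last by move=> k hk; apply: bndP; lia.
rewrite (@ext_any _ b' (maxn (bnd b) (bnd b'))); last by move=> k hk; apply: bndP; lia.
rewrite -(gsum_split (mgrp M X)); apply: gsum_eq => k.
by rewrite /extf /= (hom_add hh0) (mact_add (M:=M)).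
Qed.

Lemma ext_single (X : Ob C) m (q : mob Q (iter m Fo X)) : ext (single q) = mact M (tk X m) (h0 _ q).
Proof.
rewrite (@ext_any _ _ m.+1); last by move=> k hk /=; rewrite singc0 //; lia.
rewrite (gsum_single (mgrp M X) (i0 := m)).
- by rewrite /extf /= singc_same.
- exact: iota_uniq.
- rewrite mem_iota; lia.
- by move=> k nk; apply: extf0 => /=; rewrite singc0 // => e; rewrite e eqxx in nk.
Qed.

Lemma ext_hom : is_modhom ext.
Proof.
apply: ind_hom_gen; first exact: ext_add.
move=> X' X j g m q.
rewrite (@iact_mono_single _ _ hC hF Q _ _ _ _ _ _ (m + j) (itE F m j X')) //.
rewrite !ext_single (hom_mcast h0) (hom_act hh0) /= mact_mcastB.
rewrite -!(mact_comp (M:=M)); congr (mact M _ _).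
rewrite /tk castCodB_mono !(pmono0_mono hC hF).
change (pc (mono hC hF (j:=0) (powM F m g)) (mono hC hF (j:=m+j) (castCod (esym (itE F m j X')) (idm (iter (m + j) Fo X')))) = pc (mono hC hF (j:=m) (idm (iter m Fo X))) (mono hC hF g)).
rewrite (@pcomp_mono _ _ hC hF _ _ _ 0 (m + j) _ _ (m + j) erefl) //.
rewrite (@pcomp_mono _ _ hC hF _ _ _ m j _ _ (m + j) (itE F m j X')) //.
congr (mono hC hF _).
rewrite [powM F 0 _]/= comp_castCod_id (comp1l hC) castD_id; exact: castD_irr.
Qed.

End Ext.

Section IndProj.
Variables (C : rawcat) (F : rawfunctor C C) (hC : preadditive C) (hF : additive_functor F).
Local Notation Fo := (fobj F).
Local Notation B := (polycat hC hF).
Local Notation pc := (Defs.pcomp hC hF).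
Variable Q : module C.
Local Notation IQ := (ind hC hF Q).
Local Notation iactB := (@iact _ _ hC hF Q _ _).
Local Notation IG := (ind_grp F Q).

Lemma decomp_bnd (X : Ob C) (b : indT F Q X) :
  b = gsum (izero F Q X) (@iadd _ _ Q X) (iota 0 (bnd b)) (fun k => single (sval b k)).
Proof.
apply: ind_ext => k; rewrite isum_coef /=.
have [lt|ge] := ltnP k (bnd b).
  rewrite (gsum_single (mgrp Q _) (i0 := k)) ?iota_uniq ?mem_iota //=.
    by rewrite singc_same.
  by move=> j nj; rewrite singc0 //; move=> ej; rewrite ej eqxx in nj.
rewrite bndP // (gsum0_in (mgrp Q _)) // => j; rewrite mem_iota => /andP[_ jl].
rewrite singc0 //; lia.
Qed.

Lemma iact_tk_single0 (X : Ob C) k (q : mob Q (iter k Fo X)) :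
  iactB (tk hC hF X k) (single (m:=0) q) = single q.
Proof.
rewrite /tk (@iact_mono_single _ _ hC hF Q _ _ k _ 0 _ k erefl) //.
by rewrite mcast_id /= mact_id.
Qed.

Lemma resM_hom (M N : module B) (p : modmap M N) : is_modhom p -> is_modhom (M:=resM M) (N:=resM N) p.
Proof. case=> h1 h2; split => // X Y f x /=; exact: h2. Qed.

Lemma ind_proj : projective Q -> projective IQ.
Proof.
move=> hQ M N p g [hp sp] hg.
pose g0 : modmap Q (resM N) := fun X q => g X (single (m:=0) q).
have hg0 : is_modhom g0.
  split.
    move=> X x y; by rewrite /g0 -(hom_add hg) /= single_add.
  move=> X Y f x /=; rewrite /g0 -(hom_act hg) (pmono0_mono hC hF).
  change (g X (single (m:=0) (mact Q f x)) = g X (iactB (mono hC hF (j:=0) f) (single (m:=0) x))).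
  rewrite (@iact_mono_single _ _ hC hF Q _ _ 0 _ 0 _ 0 erefl) //.
have [h0 [hh0 ph0]] := hQ (resM M) (resM N) p g0 (conj (resM_hom hp) sp) hg0.
exists (ext h0); split; first exact: ext_hom.
move=> X b; rewrite /ext (hom_gsum hp).
have -> : g X b = g X (gsum (izero F Q X) (@iadd _ _ Q X) (iota 0 (bnd b)) (fun k => single (sval b k))).
  by rewrite -decomp_bnd.
rewrite (hom_gsum hg); apply: gsum_eq => k.
rewrite /extf (hom_act hp) ph0 /g0 -(hom_act hg) /=.
change (g X (iactB (tk hC hF X k) (single (m:=0) (sval b k))) = g X (single (sval b k))).
by rewrite iact_tk_single0.
Qed.

End IndProj.

Section Generic.
Variable C : rawcat.

Definition dsraw (M1 M2 : rawmodule C) : rawmodule C :=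
  @RawModule C (fun X => (mob M1 X * mob M2 X)%type)
    (fun X => (mzero M1 X, mzero M2 X))
    (fun X x y => (madd M1 x.1 y.1, madd M2 x.2 y.2))
    (fun X x => (mopp M1 x.1, mopp M2 x.2))
    (fun X Y f x => (mact M1 f x.1, mact M2 f x.2)).

Lemma ds_laws (M1 M2 : module C) : module_laws (dsraw M1 M2).
Proof.
split.
- move=> X; split.
  + by move=> x y w /=; rewrite !(aA (mgrp _ X)).
  + by move=> x y /=; rewrite (aC (mgrp M1 X)) (aC (mgrp M2 X)).
  + by move=> [x1 x2] /=; rewrite !(a0 (mgrp _ X)).
  + by move=> x /=; rewrite !(aN (mgrp _ X)).
- by move=> X Y f x y /=; rewrite !mact_add.
- by move=> X Y f g x /=; rewrite !mact_hadd.
- by move=> X [x1 x2] /=; rewrite !mact_id.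
- by move=> X Y Z g f x /=; rewrite !mact_comp.
Qed.
Definition dsum (M1 M2 : module C) : module C := Module (ds_laws M1 M2).

Definition zraw : rawmodule C :=
  @RawModule C (fun _ => unit) (fun _ => tt) (fun _ _ _ => tt) (fun _ _ => tt) (fun _ _ _ _ => tt).
Lemma z_laws : module_laws zraw.
Proof.
have u : forall x y : unit, x = y by case; case.
split; try (move=> *; exact: u); move=> X; split => *; exact: u.
Qed.
Definition zmod : module C := Module z_laws.

Lemma proj_triv (P : module C) : (forall X (x : mob P X), x = mzero P X) -> projective P.
Proof.
move=> hP M N p g [hp sp] hg.
exists (fun X _ => mzero M X); split.
  split; first by move=> X x y; rewrite (a0 (mgrp M X)).
  by move=> X Y f x; rewrite mact0.
by move=> X x; rewrite (hom0 hp) (hP X x) (hom0 hg).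
Qed.

Lemma zmod_proj : projective zmod.
Proof. apply: proj_triv => X; by case. Qed.

Lemma ds_proj (M1 M2 : module C) : projective M1 -> projective M2 -> projective (dsum M1 M2).
Proof.
move=> h1 h2 M N p g [hp sp] hg.
pose g1 : modmap M1 N := fun X x => g X (x, mzero M2 X).
pose g2 : modmap M2 N := fun X x => g X (mzero M1 X, x).
have hg1 : is_modhom g1.
  split.
    move=> X x y; rewrite /g1 -(hom_add hg) /=; by rewrite (a0 (mgrp M2 X)).
  move=> X Y f x; rewrite /g1 -(hom_act hg) /=; by rewrite mact0.
have hg2 : is_modhom g2.
  split.
    move=> X x y; rewrite /g2 -(hom_add hg) /=; by rewrite (a0 (mgrp M1 X)).
  move=> X Y f x; rewrite /g2 -(hom_act hg) /=; by rewrite mact0.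
have [k1 [hk1 pk1]] := h1 M N p g1 (conj hp sp) hg1.
have [k2 [hk2 pk2]] := h2 M N p g2 (conj hp sp) hg2.
exists (fun X x => madd M (k1 X x.1) (k2 X x.2)); split.
  split.
    move=> X x y /=; rewrite (hom_add hk1) (hom_add hk2) -!(aA (mgrp M X)); congr (madd M _ _).
    by rewrite !(aA (mgrp M X)) [madd M (k2 X x.2) _](aC (mgrp M X)).
  move=> X Y f x /=; by rewrite (hom_act hk1) (hom_act hk2) mact_add.
move=> X [x1 x2] /=; rewrite (hom_add hp) pk1 pk2 /g1 /g2 -(hom_add hg) /=.
by rewrite (a0r (mgrp M1 X)) (a0 (mgrp M2 X)).
Qed.

Section Ker.
Variables (M N : module C).
Unset Implicit Arguments.
Variable phi : modmap M N.
Set Implicit Arguments.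
Hypothesis hphi : is_modhom phi.

Definition kT X := {x : mob M X | phi X x = mzero N X}.
Lemma kT_ext X (x y : kT X) : sval x = sval y -> x = y.
Proof. case: x y => x hx [y hy] /= e; subst; by rewrite (proof_irrelevance _ hx hy). Qed.

Definition kzero X : kT X := exist _ (mzero M X) (hom0 hphi X).
Definition kadd X (x y : kT X) : kT X.
Proof. exists (madd M (sval x) (sval y)); by rewrite (hom_add hphi) (svalP x) (svalP y) (a0 (mgrp N X)). Defined.
Definition kopp X (x : kT X) : kT X.
Proof. exists (mopp M (sval x)); by rewrite (hom_opp hphi) (svalP x) (o0 (mgrp N X)). Defined.
Definition kact X Y (f : Hom X Y) (x : kT Y) : kT X.
Proof. exists (mact M f (sval x)); by rewrite (hom_act hphi) (svalP x) mact0. Defined.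
Definition kraw : rawmodule C := @RawModule C kT kzero kadd kopp kact.
Lemma k_laws : module_laws kraw.
Proof.
split.
- move=> X; split.
  + by move=> x y w; apply: kT_ext => /=; rewrite (aA (mgrp M X)).
  + by move=> x y; apply: kT_ext => /=; rewrite (aC (mgrp M X)).
  + by move=> x; apply: kT_ext => /=; rewrite (a0 (mgrp M X)).
  + by move=> x; apply: kT_ext => /=; rewrite (aN (mgrp M X)).
- by move=> X Y f x y; apply: kT_ext => /=; rewrite mact_add.
- by move=> X Y f g x; apply: kT_ext => /=; rewrite mact_hadd.
- by move=> X x; apply: kT_ext => /=; rewrite mact_id.
- by move=> X Y Z g f x; apply: kT_ext => /=; rewrite mact_comp.
Qed.
Definition kmod : module C := Module k_laws.
End Ker.

End Generic.

Section Twist.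
Variables (C : rawcat) (F : rawfunctor C C) (hC : preadditive C) (hF : additive_functor F).
Local Notation Fo := (fobj F).

Definition twraw (Q : rawmodule C) : rawmodule C :=
  @RawModule C (fun X => mob Q (Fo X)) (fun X => mzero Q (Fo X)) (fun X => @madd C Q (Fo X))
    (fun X => @mopp C Q (Fo X)) (fun X Y f x => mact Q (fmap F f) x).
Lemma tw_laws (Q : module C) : module_laws (twraw Q).
Proof.
split.
- move=> X; exact: (mgrp Q (Fo X)).
- move=> X Y f x y /=; exact: mact_add.
- move=> X Y f g x /=; by rewrite (fmap_add hF) mact_hadd.
- move=> X x /=; by rewrite (fmap_id hF) mact_id.
- move=> X Y Z g f x /=; by rewrite (fmap_comp hF) mact_comp.
Qed.
Definition tw (Q : module C) : module C := Module (tw_laws Q).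

Lemma tw_mcast (Q : rawmodule C) (X Y : Ob C) (e : X = Y) (x : mob Q (Fo X)) :
  @mcast C (twraw Q) X Y e x = @mcast C Q _ _ (congr1 Fo e) x.
Proof. by subst. Qed.

Lemma tw_hom (Q Q' : module C) (phi : modmap Q Q') : is_modhom phi ->
  is_modhom (M := tw Q) (N := tw Q') (fun X => phi (Fo X)).
Proof. case=> h1 h2; split => [X x y | X Y f x] /=; [exact: h1 | exact: h2]. Qed.

Variables (psi : Ob C -> Ob C) (hpsi1 : cancel Fo psi) (hpsi2 : cancel psi Fo).
Unset Implicit Arguments.
Variable finv : forall X Y : Ob C, Hom (Fo X) (Fo Y) -> Hom X Y.
Set Implicit Arguments.
Hypothesis hfinv1 : forall X Y : Ob C, cancel (@fmap C C F X Y) (finv X Y).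
Hypothesis hfinv2 : forall X Y : Ob C, cancel (finv X Y) (@fmap C C F X Y).

Definition Eo (Y : Ob C) : Y = Fo (psi Y) := esym (hpsi2 Y).
Definition Psi (Y' Y : Ob C) (u : Hom Y' Y) : Hom (psi Y') (psi Y) :=
  finv _ _ (castM (Eo Y') (Eo Y) u).
Lemma fmap_Psi (Y' Y : Ob C) (u : Hom Y' Y) : fmap F (Psi u) = castM (Eo Y') (Eo Y) u.
Proof. exact: hfinv2. Qed.
Lemma fmap_inj (X Y : Ob C) (f g : Hom X Y) : fmap F f = fmap F g -> f = g.
Proof. move=> h; have := congr1 (finv X Y) h; by rewrite !hfinv1. Qed.
Lemma Psi_comp (X Y Z : Ob C) (g : Hom Y Z) (f : Hom X Y) : Psi (comp g f) = comp (Psi g) (Psi f).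
Proof. apply: fmap_inj; by rewrite (fmap_comp hF) !fmap_Psi (castM_comp _ (Eo Y)). Qed.
Lemma Psi_add (X Y : Ob C) (f g : Hom X Y) : Psi (hadd f g) = hadd (Psi f) (Psi g).
Proof. apply: fmap_inj; by rewrite (fmap_add hF) !fmap_Psi castM_add. Qed.
Lemma Psi_id (X : Ob C) : Psi (idm X) = idm (psi X).
Proof. apply: fmap_inj; by rewrite (fmap_id hF) !fmap_Psi castM_idm. Qed.
Lemma Psi_fmap (X' X : Ob C) (f : Hom X' X) :
  Psi (fmap F f) = castM (esym (hpsi1 X')) (esym (hpsi1 X)) f.
Proof. apply: fmap_inj; rewrite fmap_Psi fmap_castM; exact: castM_irr. Qed.

Definition psraw (M : rawmodule C) : rawmodule C :=
  @RawModule C (fun Y => mob M (psi Y)) (fun Y => mzero M (psi Y)) (fun Y => @madd C M (psi Y))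
    (fun Y => @mopp C M (psi Y)) (fun Y' Y u x => mact M (Psi u) x).
Lemma ps_laws (M : module C) : module_laws (psraw M).
Proof.
split.
- move=> X; exact: (mgrp M (psi X)).
- move=> X Y f x y /=; exact: mact_add.
- move=> X Y f g x /=; by rewrite Psi_add mact_hadd.
- move=> X x /=; by rewrite Psi_id mact_id.
- move=> X Y Z g f x /=; by rewrite Psi_comp mact_comp.
Qed.
Definition psm (M : module C) : module C := Module (ps_laws M).

Lemma tw_proj (Q : module C) : projective Q -> projective (tw Q).
Proof.
move=> hQ M N p g [hp sp] hg.
pose gp : modmap Q (psm N) := fun Y q => g (psi Y) (mcast (Eo Y) q).
have hgp : is_modhom gp.
  split.
    by move=> X x y; rewrite /gp mcast_add (hom_add hg).
  move=> X Y f x /=; rewrite /gp -(hom_act hg) /= fmap_Psi mact_castM mcastK mcast_id.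
  done.
have hpp : epi_modhom (M := psm M) (N := psm N) (fun Y => p (psi Y)).
  split; last by move=> X y; exact: sp.
  split; first by move=> X x y; exact: (hom_add hp).
  move=> X Y f x; exact: (hom_act hp).
have [h' [hh' ph']] := hQ (psm M) (psm N) (fun Y => p (psi Y)) gp hpp hgp.
exists (fun X q => mcast (hpsi1 X) (h' (Fo X) q)); split.
  split.
    by move=> X x y; rewrite (hom_add hh') mcast_add.
  move=> X Y f x /=.
  rewrite (hom_act hh') /= Psi_fmap mact_castM mcastK mcast_id.
  congr (mact M f _); exact: mcast_irr.
move=> X q; rewrite (hom_mcast p) ph' /gp.
have gen : forall Z X (e : Z = X) (e' : Fo X = Fo Z) (q : mob Q (Fo X)),
    mcast e (g Z (mcast e' q)) = g X q.
  by move=> Z X0 e e' q0; subst; rewrite !mcast_id.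
exact: gen.
Qed.

End Twist.

Section IndMaps.
Variables (C : rawcat) (F : rawfunctor C C) (hC : preadditive C) (hF : additive_functor F).
Local Notation Fo := (fobj F).
Local Notation B := (polycat hC hF).
Local Notation pc := (Defs.pcomp hC hF).

Section IM.
Variables (Q Q' : module C).
Unset Implicit Arguments.
Variable phi : modmap Q Q'.
Set Implicit Arguments.
Hypothesis hphi : is_modhom phi.

Lemma indmap_supp (X : Ob C) (b : indT F Q X) : indsupp (fun k => phi _ (sval b k)).
Proof. case: b => b [N hN]; exists N => k hk /=; by rewrite hN // (hom0 hphi). Qed.
Definition indmap : modmap (ind hC hF Q) (ind hC hF Q') :=
  fun X b => exist _ _ (indmap_supp b).

Lemma indmap_hom : is_modhom indmap.
Proof.
split.
  by move=> X x y; apply: ind_ext => k /=; rewrite (hom_add hphi).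
move=> X Y f x; apply: ind_ext => n /=; rewrite (hom_gsum hphi); apply: gsum_eq => k.
by rewrite (hom_mcast phi) (hom_act hphi).
Qed.
End IM.

Section Shift.
Variable Q : module C.
Definition shc (X : Ob C) (a : indT F (tw hF Q) X) (k : nat) : mob Q (iter k Fo X) :=
  match k return mob Q (iter k Fo X) with 0 => mzero Q X | k'.+1 => sval a k' end.
Lemma shc_supp (X : Ob C) (a : indT F (tw hF Q) X) : indsupp (shc a).
Proof. case: a => a [N hN]; exists N.+1 => -[|k] hk //=; by rewrite hN. Qed.
Definition shift : modmap (ind hC hF (tw hF Q)) (ind hC hF Q) := fun X a => exist _ _ (shc_supp a).

Lemma shift_single (X : Ob C) n (y : mob Q (iter n.+1 Fo X)) :
  shift (single (Q := tw hF Q) (m := n) y) = single (m := n.+1) y.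
Proof.
apply: ind_ext => -[|k] /=; first by rewrite singc0.
rewrite /singc; case: eqP => [e|ne]; case: eqP => [e'|ne'] //; try lia.
rewrite tw_mcast; exact: mcast_irr.
Qed.

Lemma shift_hom : is_modhom shift.
Proof.
apply: ind_hom_gen.
  move=> X b b'; apply: ind_ext => -[|k] /=; last by [].
  by rewrite (a0 (mgrp Q _)).
move=> X' X j g m q.
rewrite (@iact_mono_single _ _ hC hF (tw hF Q) _ _ _ _ _ _ (m + j) (itE F m j X')) //.
rewrite !shift_single.
change (@single _ _ Q _ (m + j).+1 (mcast (itE F m j X') (mact (tw hF Q) (powM F m g) q)) =
  @iact _ _ hC hF Q _ _ (mono hC hF g) (@single _ _ Q _ m.+1 q)).
rewrite (@iact_mono_single _ _ hC hF Q _ _ _ _ _ _ (m.+1 + j) (itE F m.+1 j X')) //.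
rewrite tw_mcast; congr single; exact: mcast_irr.
Qed.
End Shift.

Section Delta.
Variable Q : module C.
Unset Implicit Arguments.
Variable phi : modmap (tw hF Q) Q.
Set Implicit Arguments.
Hypothesis hphi : is_modhom phi.
Definition deltaQ : modmap (ind hC hF (tw hF Q)) (ind hC hF Q) :=
  fun X a => iadd (shift a) (iopp (indmap hphi a)).
Lemma deltaQ0 (X : Ob C) (a : indT F (tw hF Q) X) :
  sval (deltaQ a) 0 = madd Q (mzero Q X) (mopp Q (phi X (sval a 0))).
Proof. by []. Qed.
Lemma deltaQS (X : Ob C) (a : indT F (tw hF Q) X) k :
  sval (deltaQ a) k.+1 = madd Q (sval a k) (mopp Q (phi _ (sval a k.+1))).
Proof. by []. Qed.
End Delta.

End IndMaps.

Section ConeMap.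
Variables (C : rawcat) (M1 M2 N1 N2 : module C).
Unset Implicit Arguments.
Variables (u : modmap M1 N1) (v : modmap M2 N1) (w : modmap M2 N2).
Set Implicit Arguments.
Hypotheses (hu : is_modhom u) (hv : is_modhom v) (hw : is_modhom w).
Definition conemap : modmap (dsum M1 M2) (dsum N1 N2) :=
  fun X x => (madd N1 (u X x.1) (v X x.2), mopp N2 (w X x.2)).
Lemma conemap_hom : is_modhom conemap.
Proof.
split.
  move=> X x y; rewrite /conemap /= (hom_add hu) (hom_add hv) (hom_add hw) (oD (mgrp N2 X)).
  congr pair; rewrite -!(aA (mgrp N1 X)); congr (madd N1 _ _).
  by rewrite !(aA (mgrp N1 X)) [madd N1 (v X x.2) _](aC (mgrp N1 X)).
move=> X Y f x; rewrite /conemap /= (hom_act hu) (hom_act hv) (hom_act hw).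
by rewrite mact_add mact_opp.
Qed.
End ConeMap.

Lemma hom_comp (C : rawcat) (M N K : module C) (f : modmap M N) (g : modmap N K) :
  is_modhom f -> is_modhom g -> is_modhom (M:=M) (N:=K) (fun X x => g X (f X x)).
Proof.
move=> hf hg; split.
  by move=> X x y; rewrite (hom_add hf) (hom_add hg).
by move=> X Y h x; rewrite (hom_act hf) (hom_act hg).
Qed.

Lemma hom_sub (C : rawcat) (M N : module C) (f g : modmap M N) :
  is_modhom f -> is_modhom g -> is_modhom (M:=M) (N:=N) (fun X x => madd N (f X x) (mopp N (g X x))).
Proof.
move=> hf hg; split.
  move=> X x y; rewrite (hom_add hf) (hom_add hg) (oD (mgrp N X)) -!(aA (mgrp N X)).
  congr (madd N _ _); by rewrite !(aA (mgrp N X)) [madd N (mopp N _) (f X y)](aC (mgrp N X)).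
by move=> X Y h x; rewrite (hom_act hf) (hom_act hg) mact_add mact_opp.
Qed.

Section IndMapsMore.
Variables (C : rawcat) (F : rawfunctor C C) (hC : preadditive C) (hF : additive_functor F).
Local Notation Fo := (fobj F).
Lemma indmap_single (Q Q' : module C) (phi : modmap Q Q') (hphi : is_modhom phi) (X : Ob C) m
  (q : mob Q (iter m Fo X)) :
  @indmap _ _ hC hF _ _ _ hphi X (single q) = single (phi _ q).
Proof.
apply: ind_ext => k /=; rewrite /singc; case: eqP => [e|_]; first by rewrite (hom_mcast phi).
exact: (hom0 hphi).
Qed.
Lemma decompI (Q : module C) (X : Ob C) (b : indT F Q X) :
  b = gsum (mzero (ind hC hF Q) X) (@madd _ (ind hC hF Q) X) (iota 0 (bnd b)) (fun k => single (sval b k)).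
Proof. exact: decomp_bnd. Qed.
Lemma deltaQ_hom (Q : module C) (phi : modmap (tw hF Q) Q) (hphi : is_modhom phi) :
  is_modhom (@deltaQ _ _ hC hF _ _ hphi).
Proof. apply: (hom_sub (M := ind hC hF (tw hF Q)) (N := ind hC hF Q)); [exact: shift_hom | exact: indmap_hom]. Qed.
End IndMapsMore.

Section SES.
Variables (C : rawcat) (F : rawfunctor C C) (hC : preadditive C) (hF : additive_functor F).
Local Notation Fo := (fobj F).
Local Notation B := (polycat hC hF).
Local Notation pc := (Defs.pcomp hC hF).
Variable M : module B.
Local Notation N := (resM M).
Local Notation Nt := (tw hF N).

Definition alpha : modmap Nt N := fun X x => mact M (tk hC hF X 1) x.

Lemma tk0 (X : Ob C) : tk hC hF X 0 = pid F X.
Proof. by rewrite /pid (pmono0_mono hC hF). Qed.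

Lemma tk_comp (X : Ob C) m : pc (tk hC hF (iter m Fo X) 1) (tk hC hF X m) = tk hC hF X m.+1.
Proof.
rewrite /tk (@pcomp_mono _ _ hC hF _ _ _ 1 m _ _ m.+1 (itE F 1 m X)) //.
congr (mono hC hF _); rewrite /= (fmap_id hF) (comp1l hC); exact: castD_id.
Qed.

Lemma alpha_hom : is_modhom alpha.
Proof.
split; first by move=> X x y; rewrite /alpha mact_add.
move=> X Y f x; rewrite /alpha /= -!(mact_comp (M:=M)).
congr (mact M _ _).
change (pc (pmono0 F (fmap F f)) (tk hC hF X 1) = pc (tk hC hF Y 1) (pmono0 F f)).
rewrite !(pmono0_mono hC hF) /tk.
rewrite (@pcomp_mono _ _ hC hF _ _ _ 0 1 _ _ 1 erefl) //.
rewrite (@pcomp_mono _ _ hC hF _ _ _ 1 0 _ _ 1 erefl) //.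
congr (mono hC hF _); by rewrite /= (comp1l hC) (comp1r hC).
Qed.

Definition idN : modmap N N := fun X x => x.
Lemma idN_hom : is_modhom idN. Proof. by split. Qed.

Local Notation eps := (fun (X : Ob C) (b : indT F N X) => @ext _ _ hC hF N M idN X b).
Local Notation delta := (fun (X : Ob C) (a : indT F Nt X) => @deltaQ _ _ hC hF N alpha alpha_hom X a).
Local Notation IN := (ind hC hF N).
Local Notation INt := (ind hC hF Nt).

Lemma eps_hom : is_modhom (M:=IN) (N:=M) (fun X b => eps X b).
Proof. exact: ext_hom idN_hom. Qed.
Lemma delta_hom : is_modhom (M:=INt) (N:=IN) (fun X a => delta X a).
Proof. exact: deltaQ_hom. Qed.

Lemma eps_single (X : Ob C) m (q : mob N (iter m Fo X)) : eps X (single q) = mact M (tk hC hF X m) q.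
Proof. exact: (ext_single idN_hom). Qed.

Lemma eps_surj (X : Ob C) (y : mob M X) : exists b, eps X b = y.
Proof.
exists (single (Q:=N) (m:=0) y); rewrite eps_single tk0; exact: (mact_id (M:=M)).
Qed.

Lemma eps_delta (X : Ob C) (a : indT F Nt X) : eps X (delta X a) = mzero M X.
Proof.
rewrite /= /deltaQ (hom_add (ext_hom idN_hom)) (hom_opp (ext_hom idN_hom)).
suff -> : ext idN (@shift _ _ hC hF N X a) = ext idN (indmap alpha_hom a) by exact: (aNr (mgrp M X)).
pose f := fun k : nat => @single _ _ Nt X k (sval a k).
have E : a = gsum (mzero INt X) (@madd _ INt X) (iota 0 (bnd a)) f := decompI hC hF a.
move: (iota 0 (bnd a)) E => s ->.
rewrite (hom_gsum (shift_hom hC hF N)) (hom_gsum (indmap_hom hC hF alpha_hom)).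
rewrite !(hom_gsum (ext_hom idN_hom)); apply: gsum_eq => k.
rewrite (shift_single hC hF) indmap_single !eps_single /alpha -(mact_comp (M:=M)).
by rewrite -[comp _ _]/(pc _ _) tk_comp.
Qed.

Lemma delta_inj (X : Ob C) (a : indT F Nt X) : delta X a = izero F N X -> a = izero F Nt X.
Proof.
move=> h.
have hc : forall k, sval a k = alpha (sval a k.+1).
  move=> k; have := congr1 (fun b => sval b k.+1) h; rewrite /= => e.
  exact: (sub_eq0 (mgrp N _) e).
have H : forall r k, bnd a <= k + r -> sval a k = mzero Nt _.
  elim => [|r IH] k hk; first by apply: bndP; lia.
  rewrite hc IH; last by lia.
  exact: (hom0 alpha_hom).
apply: ind_ext => k; apply: (H (bnd a)); lia.
Qed.

Lemma delta0 (X : Ob C) : delta X (izero F Nt X) = izero F N X.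
Proof. exact: (hom0 delta_hom X). Qed.

Lemma ker_eps (X : Ob C) (b : indT F N X) : eps X b = mzero M X -> exists a, delta X a = b.
Proof.
have G := mgrp N.
suff H : forall m (b : indT F N X), (forall k, m < k -> sval b k = mzero N _) ->
    eps X b = mzero M X -> exists a, delta X a = b.
  by move=> hb; apply: (H (bnd b)) => // k hk; apply: bndP; lia.
elim => [|m IH] {}b hb he.
  have hb0 : sval b 0 = mzero N X.
    move: he; rewrite /= (ext_any idN_hom (n := 1)); last by move=> k hk; apply: hb; lia.
    by rewrite /= /extf (a0r (mgrp M X)) tk0 /idN (mact_id (M:=M)).
  exists (izero F Nt X); rewrite delta0; apply: ind_ext => -[|k] /=; first by rewrite hb0.
  by rewrite hb.
pose a' := @single _ _ Nt X m (sval b m.+1).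
pose b' := iadd b (iopp (delta X a')).
have hb' : forall k, m < k -> sval b' k = mzero N _.
  move=> k hk; rewrite /b' /=.
  case: k hk => [|k] hk; first by lia.
  rewrite /deltaQ /= /a' /=.
  have [ekm|nkm] := eqVneq k m.
    subst k; rewrite singc_same singc0; last by lia.
    rewrite (hom0 alpha_hom) (o0 (G _)) (a0r (G _)); exact: (aNr (G _)).
  rewrite singc0; last by move=> e; rewrite e eqxx in nkm.
  rewrite singc0; last by lia.
  rewrite hb; last by lia.
  by rewrite (hom0 alpha_hom) (o0 (G _)) (a0r (G _)) (o0 (G _)) (a0r (G _)).
have he' : eps X b' = mzero M X.
  rewrite /b' (hom_add (ext_hom idN_hom)).
  change (madd M (ext idN b) (ext idN (mopp (ind hC hF N) (delta X a'))) = mzero M X).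
  rewrite (hom_opp (ext_hom idN_hom)) he.
  have := eps_delta a'; rewrite /= => ->.
  by rewrite (o0 (mgrp M X)) (a0r (mgrp M X)).
have [a'' ha''] := IH b' hb' he'.
exists (iadd a' a'').
have hd := hom_add (@deltaQ_hom _ _ hC hF _ _ alpha_hom) a' a''.
rewrite /= in hd ha''; rewrite /= hd ha'' /b'.
change (iadd (delta X a') (iadd b (iopp (delta X a'))) = b).
apply: ind_ext => k /=.
by rewrite (aC (G _) (sval b k)) (aA (G _)) (aNr (G _)) (a0 (G _)).
Qed.

End SES.

Section IndExact.
Variables (C : rawcat) (F : rawfunctor C C) (hC : preadditive C) (hF : additive_functor F).
Local Notation Fo := (fobj F).
Variables (M1 M2 M3 : module C).
Unset Implicit Arguments.
Variables (f : modmap M1 M2) (g : modmap M2 M3).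
Set Implicit Arguments.
Hypotheses (hf : is_modhom f) (hg : is_modhom g).

Lemma ind_exact : exact_at f g ->
  exact_at (@indmap _ _ hC hF _ _ _ hf) (@indmap _ _ hC hF _ _ _ hg).
Proof.
move=> ex X y; split.
  move=> h.
  have hk : forall k, g _ (sval y k) = mzero M3 _.
    by move=> k; have := congr1 (fun b => sval b k) h.
  pose pre k := proj1_sig (constructive_indefinite_description _ (proj1 (ex _ (sval y k)) (hk k))).
  have preP : forall k, f _ (pre k) = sval y k.
    move=> k; rewrite /pre; by case: constructive_indefinite_description.
  pose x k := if k < bnd y then pre k else mzero M1 _.
  have xs : indsupp x by exists (bnd y) => k hk'; rewrite /x; case: ifP => //; lia.
  exists (exist _ x xs); apply: ind_ext => k /=; rewrite /x; case: ifP => [_|]; first exact: preP.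
  move=> hk'; rewrite (hom0 hf) bndP //; lia.
case=> x <-; apply: ind_ext => k /=; apply/(ex _ _).2; by exists (sval x k).
Qed.

Lemma ind_surj : (forall X (y : mob M2 X), exists x, f X x = y) ->
  forall X (y : indT F M2 X), exists x, @indmap _ _ hC hF _ _ _ hf X x = y.
Proof.
move=> sf X y.
pose pre k := proj1_sig (constructive_indefinite_description _ (sf _ (sval y k))).
have preP : forall k, f _ (pre k) = sval y k.
  move=> k; rewrite /pre; by case: constructive_indefinite_description.
pose x k := if k < bnd y then pre k else mzero M1 _.
have xs : indsupp x by exists (bnd y) => k hk'; rewrite /x; case: ifP => //; lia.
exists (exist _ x xs); apply: ind_ext => k /=; rewrite /x; case: ifP => [_|]; first exact: preP.
move=> hk'; rewrite (hom0 hf) bndP //; lia.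
Qed.
End IndExact.

Section Comparison.
Variable C : rawcat.
Variables (Pm Qm : nat -> module C) (NP NQ : module C).
Unset Implicit Arguments.
Variables (dPm : forall n, modmap (Pm n.+1) (Pm n)) (dQm : forall n, modmap (Qm n.+1) (Qm n)).
Variables (epsP : modmap (Pm 0) NP) (epsQ : modmap (Qm 0) NQ) (alph : modmap NP NQ).
Set Implicit Arguments.
Hypotheses (hdP : forall n, is_modhom (dPm n)) (hdQ : forall n, is_modhom (dQm n)).
Hypotheses (heP : is_modhom epsP) (heQ : epi_modhom epsQ) (hal : is_modhom alph).
Hypothesis projP : forall n, projective (Pm n).
Hypothesis cP0 : forall X y, epsP X (dPm 0 X y) = mzero NP X.
Hypothesis cP : forall n X y, dPm n X (dPm n.+1 X y) = mzero (Pm n) X.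
Hypothesis exQ0 : exact_at (dQm 0) epsQ.
Hypothesis exQ : forall n, exact_at (dQm n.+1) (dQm n).

Unset Implicit Arguments.
Definition CodQ n : module C := if n is m.+1 then Qm m else NQ.
Definition Dq n : modmap (Qm n) (CodQ n) :=
  match n as n0 return modmap (Qm n0) (CodQ n0) with 0 => epsQ | m.+1 => dQm m end.
Lemma Dq_hom n : is_modhom (Dq n). Proof. case: n => [|n] /=; [exact: heQ.1 | exact: hdQ]. Qed.
Lemma Dq_exact n : exact_at (dQm n) (Dq n). Proof. by case: n => [|n] /=. Qed.

Definition Stage n := { a : modmap (Pm n) (Qm n) |
  is_modhom a /\ forall X y, Dq n X (a X (dPm n X y)) = mzero (CodQ n) X }.

Lemma base_ex : exists a : modmap (Pm 0) (Qm 0),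
  (is_modhom a /\ forall X y, Dq 0 X (a X (dPm 0 X y)) = mzero (CodQ 0) X) /\
  forall X x, epsQ X (a X x) = alph X (epsP X x).
Proof.
have hg : is_modhom (M:=Pm 0) (N:=NQ) (fun X x => alph X (epsP X x)) by exact: hom_comp.
have [a [ha pa]] := @projP 0 (Qm 0) NQ epsQ _ heQ hg.
exists a; split => //; split => // X y /=; by rewrite pa cP0 (hom0 hal).
Qed.

Lemma step_ex n (s : Stage n) : exists a : modmap (Pm n.+1) (Qm n.+1),
  (is_modhom a /\ forall X y, Dq n.+1 X (a X (dPm n.+1 X y)) = mzero (CodQ n.+1) X) /\
  forall X x, dQm n X (a X x) = sval s X (dPm n X x).
Proof.
case: s => a [ha inv] /=.
pose K := kmod (Dq_hom n).
pose p : modmap (Qm n.+1) K := fun X x => exist _ (dQm n X x) ((Dq_exact n X (dQm n X x)).2 (ex_intro _ x erefl)).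
pose g : modmap (Pm n.+1) K := fun X y => exist _ (a X (dPm n X y)) (inv X y).
have hp : epi_modhom p.
  split.
    split.
      by move=> X x y; apply: kT_ext => /=; rewrite (hom_add (hdQ n)).
    by move=> X Y f x; apply: kT_ext => /=; rewrite (hom_act (hdQ n)).
  move=> X [y hy]; have [x hx] := (Dq_exact n X y).1 hy.
  exists x; apply: kT_ext => /=; exact: hx.
have hg : is_modhom g.
  split.
    by move=> X x y; apply: kT_ext => /=; rewrite (hom_add (hdP n)) (hom_add ha).
  by move=> X Y f x; apply: kT_ext => /=; rewrite (hom_act (hdP n)) (hom_act ha).
have [h [hh ph]] := @projP n.+1 (Qm n.+1) K p g hp hg.
exists h; split; last by move=> X x; have := congr1 sval (ph X x).
split => // X y /=.
have := congr1 sval (ph X (dPm n.+1 X y)); rewrite /= => ->.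
by rewrite cP (hom0 ha).
Qed.

Definition base : Stage 0 :=
  let w := constructive_indefinite_description _ base_ex in
  exist _ (proj1_sig w) (proj1 (proj2_sig w)).
Definition stepS n (s : Stage n) : Stage n.+1 :=
  let w := constructive_indefinite_description _ (step_ex n s) in
  exist _ (proj1_sig w) (proj1 (proj2_sig w)).
Fixpoint chain n : Stage n := match n with 0 => base | m.+1 => stepS m (chain m) end.

Lemma comparison : exists am : forall n, modmap (Pm n) (Qm n),
  (forall n, is_modhom (am n)) /\
  (forall X x, epsQ X (am 0 X x) = alph X (epsP X x)) /\
  (forall n X x, dQm n X (am n.+1 X x) = am n X (dPm n X x)).
Proof.
exists (fun n => sval (chain n)); split; first by move=> n; case: (chain n) => a [].
split.
  move=> X x /=; rewrite /base /=; by case: constructive_indefinite_description => a [_ h] /=.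
move=> n X x /=; rewrite /stepS /=.
by case: constructive_indefinite_description => a [_ h] /=.
Qed.

Set Implicit Arguments.
End Comparison.

Section Cone.
Variable D : rawcat.
Variables (L K : nat -> module D) (LL KK M : module D).
Unset Implicit Arguments.
Variables (dL : forall n, modmap (L n.+1) (L n)) (dK : forall n, modmap (K n.+1) (K n)).
Variables (eL : modmap (L 0) LL) (eK : modmap (K 0) KK) (del : modmap KK LL) (eps : modmap LL M).
Variable dn : forall n, modmap (K n) (L n).
Hypotheses (hdL : forall n, is_modhom (dL n)) (hdK : forall n, is_modhom (dK n)).
Hypotheses (heL : is_modhom eL) (heK : is_modhom eK) (hdel : is_modhom del) (heps : is_modhom eps).
Hypothesis (hdn : forall n, is_modhom (dn n)).
Hypotheses (exL0 : exact_at (dL 0) eL) (exL : forall n, exact_at (dL n.+1) (dL n)).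
Hypotheses (exK0 : exact_at (dK 0) eK) (exK : forall n, exact_at (dK n.+1) (dK n)).
Hypothesis sK : forall X (z : mob KK X), exists a, eK X a = z.
Hypothesis sL : forall X (z : mob LL X), exists a, eL X a = z.
Hypothesis del_inj : forall X (z : mob KK X), del X z = mzero LL X -> z = mzero KK X.
Hypothesis eps_del : forall X (z : mob KK X), eps X (del X z) = mzero M X.
Hypothesis ker_eps : forall X (b : mob LL X), eps X b = mzero M X -> exists z, del X z = b.
Hypothesis eps_surj : forall X (y : mob M X), exists b, eps X b = y.
Hypothesis ch0 : forall X (a : mob (K 0) X), eL X (dn 0 X a) = del X (eK X a).
Hypothesis chS : forall n X (a : mob (K n.+1) X), dL n X (dn n.+1 X a) = dn n X (dK n X a).

Definition S n : module D := if n is m.+1 then K m else zmod D.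
Definition dS n : modmap (K n) (S n) :=
  match n as n0 return modmap (K n0) (S n0) with 0 => fun X _ => tt | m.+1 => dK m end.
Lemma dS_hom n : is_modhom (dS n).
Proof. case: n => [|n] /=; last exact: hdK. by split. Qed.
Definition Cn n : module D := dsum (L n) (S n).
Definition dC n : modmap (Cn n.+1) (Cn n) := conemap (dL n) (dn n) (dS n).
Lemma dC_hom n : is_modhom (dC n).
Proof. apply: conemap_hom; [exact: hdL | exact: hdn | exact: dS_hom]. Qed.
Definition eC : modmap (Cn 0) M := fun X y => eps X (eL X y.1).
Lemma eC_epi : epi_modhom eC.
Proof.
split.
  split.
    by move=> X x y; rewrite /eC /= (hom_add heL) (hom_add heps).
  by move=> X Y f x; rewrite /eC /= (hom_act heL) (hom_act heps).
move=> X y; have [b hb] := eps_surj X y; have [a ha] := sL X b.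
by exists (a, tt); rewrite /eC /= ha hb.
Qed.

Lemma ex_dL0 X (c : mob (L 1) X) : eL X (dL 0 X c) = mzero LL X.
Proof. apply/(exL0 X _).2; by exists c. Qed.
Lemma ex_dL n X (c : mob (L n.+2) X) : dL n X (dL n.+1 X c) = mzero (L n) X.
Proof. apply/(exL n X _).2; by exists c. Qed.
Lemma ex_dK n X (c : mob (K n.+2) X) : dK n X (dK n.+1 X c) = mzero (K n) X.
Proof. apply/(exK n X _).2; by exists c. Qed.

Lemma cone_exact0 : exact_at (dC 0) eC.
Proof.
move=> X [b u]; split.
  rewrite /eC /= => h.
  have [z hz] := ker_eps X _ h; have [a ha] := sK X z.
  have hr : eL X (madd (L 0) b (mopp (L 0) (dn 0 X a))) = mzero LL X.
    by rewrite (hom_add heL) (hom_opp heL) ch0 ha hz (aNr (mgrp LL X)).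
  have [c hc] := (exL0 X _).1 hr.
  exists (c, a); rewrite /dC /conemap /=; case: u; congr pair.
    by rewrite hc -(aA (mgrp _ X)) (aN (mgrp _ X)) (a0r (mgrp _ X)).
case=> [[c a] <-]; rewrite /eC /dC /conemap /=.
by rewrite (hom_add heL) ex_dL0 ch0 (a0 (mgrp LL X)) eps_del.
Qed.

Lemma claim n X (b : mob (L n.+1) X) (a : mob (K n) X) :
  madd (L n) (dL n X b) (dn n X a) = mzero (L n) X -> mopp (S n) (dS n X a) = mzero (S n) X ->
  exists c, dK n X c = a.
Proof.
case: n b a => [|m] b a h1 h2.
  apply/(exK0 X a).1; apply: del_inj; rewrite -ch0.
  have := congr1 (eL X) h1; rewrite (hom_add heL) ex_dL0 (a0 (mgrp LL X)) (hom0 heL) => -> //.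
apply/(exK m X a).1.
move: h2 => /= h2; by rewrite -(oK (mgrp _ X) (dK m X a)) h2 (o0 (mgrp _ X)).
Qed.

Lemma cone_exactS n : exact_at (dC n.+1) (dC n).
Proof.
move=> X [b a]; split.
  rewrite /dC /conemap /= => h; case: h => h1 h2.
  have [c hc] := claim n X b a h1 h2.
  have hr : dL n X (madd (L n.+1) b (dn n.+1 X c)) = mzero (L n) X.
    by rewrite (hom_add (hdL n)) chS hc.
  have [e he] := (exL n X _).1 hr.
  exists (e, mopp (K n.+1) c); rewrite /dC /conemap /=; congr pair.
    rewrite he (hom_opp (hdn _)) -(aA (mgrp _ X)) (aNr (mgrp _ X)) (a0r (mgrp _ X)) //.
  by rewrite (hom_opp (hdK n)) (oK (mgrp _ X)) hc.
move=> [x hx]; rewrite -hx; case: x {hx} => e c; rewrite /dC /conemap /=.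
rewrite (hom_add (hdL n)) ex_dL chS (a0 (mgrp _ X)) (hom_opp (hdn n)) (aNr (mgrp _ X)).
congr pair; rewrite (hom_opp (dS_hom n)) (oK (mgrp _ X)).
case: n b a e c => [|m] b a e c /=; first by [].
exact: ex_dK.
Qed.

Set Implicit Arguments.
End Cone.

Section Final.
Variables (C : rawcat) (F : rawfunctor C C) (hC : preadditive C) (hF : additive_functor F).
Hypothesis hFa : automorphism F.
Local Notation Fo := (fobj F).
Local Notation B := (polycat hC hF).

Lemma indmap_delta (Q Q' : module C) (psi : modmap Q Q') (phi : modmap (tw hF Q) Q)
  (phi' : modmap (tw hF Q') Q') (hpsi : is_modhom psi) (hphi : is_modhom phi) (hphi' : is_modhom phi')
  (hpsit : is_modhom (M:=tw hF Q) (N:=tw hF Q') (fun X => psi (Fo X))) :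
  (forall X x, psi X (phi X x) = phi' X (psi (Fo X) x)) ->
  forall X (a : indT F (tw hF Q) X),
  @indmap _ _ hC hF _ _ _ hpsi X (@deltaQ _ _ hC hF _ _ hphi X a) =
  @deltaQ _ _ hC hF _ _ hphi' X (@indmap _ _ hC hF _ _ _ hpsit X a).
Proof.
move=> hc X a; apply: ind_ext => -[|k] /=.
  by rewrite (hom_add hpsi) (hom_opp hpsi) (hom0 hpsi) hc.
by rewrite (hom_add hpsi) (hom_opp hpsi) hc.
Qed.

Lemma part1 (M : module B) d : pdim_le (restrict M) d -> pdim_le M d.+1.
Proof.
case=> P [dP [eps [[hdP heps] projP0 zeroP ex0 exS]]].
case: hFa => _ [psi hpsi1 hpsi2] hbij.
have [finv hfinv] : {finv : forall X Y : Ob C, Hom (Fo X) (Fo Y) -> Hom X Y |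
    forall X Y, cancel (@fmap C C F X Y) (finv X Y) /\ cancel (finv X Y) (@fmap C C F X Y)}.
  have ex : forall X Y : Ob C, exists g : Hom (Fo X) (Fo Y) -> Hom X Y,
      cancel (@fmap C C F X Y) g /\ cancel g (@fmap C C F X Y).
    by move=> X Y; case: (hbij X Y) => g h1 h2; exists g.
  exists (fun X Y => proj1_sig (constructive_indefinite_description _ (ex X Y))).
  move=> X Y; by case: constructive_indefinite_description.
have hfinv1 : forall X Y, cancel (@fmap C C F X Y) (finv X Y) by move=> X Y; case: (hfinv X Y).
have hfinv2 : forall X Y, cancel (finv X Y) (@fmap C C F X Y) by move=> X Y; case: (hfinv X Y).
have projP : forall n, projective (P n).
  move=> n; have [le|lt] := leqP n d; first exact: projP0.
  by apply: proj_triv => X x; apply: zeroP.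
pose N := resM M.
pose epsN : modmap (P 0) N := eps.
have hepsN : epi_modhom epsN := heps.
pose Pt n := tw hF (P n).
pose dPt n : modmap (Pt n.+1) (Pt n) := fun X => dP n (Fo X).
pose epst : modmap (Pt 0) (tw hF N) := fun X => epsN (Fo X).
have hdPt : forall n, is_modhom (dPt n) by move=> n; exact: tw_hom.
have hepst : is_modhom epst by exact: tw_hom hepsN.1.
have cP0 : forall X y, epst X (dPt 0 X y) = mzero (tw hF N) X.
  by move=> X y; apply/(ex0 (Fo X) _).2; exists y.
have cP : forall n X y, dPt n X (dPt n.+1 X y) = mzero (Pt n) X.
  by move=> n X y; apply/(exS n (Fo X) _).2; exists y.
have [am [ham [cm0 cmS]]] := @comparison C Pt P (tw hF N) N dPt dP epst epsN (@alpha _ _ hC hF M)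
   hdPt hdP hepst hepsN (alpha_hom M) (fun n => tw_proj hpsi1 hpsi2 hfinv1 hfinv2 (projP n)) cP0 cP ex0 exS.
pose L n := ind hC hF (P n).
pose K n := ind hC hF (Pt n).
pose LL := ind hC hF N.
pose KK := ind hC hF (tw hF N).
pose dL n : modmap (L n.+1) (L n) := @indmap _ _ hC hF _ _ _ (hdP n).
pose dK n : modmap (K n.+1) (K n) := @indmap _ _ hC hF _ _ _ (hdPt n).
pose eL : modmap (L 0) LL := @indmap _ _ hC hF _ _ _ hepsN.1.
pose eK : modmap (K 0) KK := @indmap _ _ hC hF _ _ _ hepst.
pose del : modmap KK LL := @deltaQ _ _ hC hF _ _ (alpha_hom M).
pose ep : modmap LL M := @ext _ _ hC hF N M (@idN _ _ hC hF M).
pose dn n : modmap (K n) (L n) := @deltaQ _ _ hC hF _ _ (ham n).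
have hdL : forall n, is_modhom (dL n) by move=> n; exact: indmap_hom.
have hdK : forall n, is_modhom (dK n) by move=> n; exact: indmap_hom.
have heL : is_modhom eL by exact: indmap_hom.
have heK : is_modhom eK by exact: indmap_hom.
have hdn : forall n, is_modhom (dn n) by move=> n; exact: deltaQ_hom.
have hep : is_modhom ep by exact: ext_hom (idN_hom M).
have exL0 : exact_at (dL 0) eL by exact: ind_exact.
have exL : forall n, exact_at (dL n.+1) (dL n) by move=> n; exact: ind_exact.
have exK0 : exact_at (dK 0) eK.
  apply: ind_exact => X y; exact: (ex0 (Fo X) y).
have exK : forall n, exact_at (dK n.+1) (dK n).
  move=> n; apply: ind_exact => X y; exact: (exS n (Fo X) y).
have sK : forall X (z : mob KK X), exists a, eK X a = z.
  move=> X z; apply: (ind_surj hC hF hepst) => X0 y; exact: (hepsN.2 (Fo X0) y).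
have sL : forall X (z : mob LL X), exists a, eL X a = z.
  move=> X z; apply: (ind_surj hC hF hepsN.1) => X0 y; exact: (hepsN.2 X0 y).
have del_inj : forall X (z : mob KK X), del X z = mzero LL X -> z = mzero KK X.
  move=> X z; exact: delta_inj.
have eps_del : forall X (z : mob KK X), ep X (del X z) = mzero M X.
  move=> X z; exact: eps_delta.
have ker_ep : forall X (b : mob LL X), ep X b = mzero M X -> exists z, del X z = b.
  move=> X b; exact: ker_eps.
have ep_surj : forall X (y : mob M X), exists b, ep X b = y.
  move=> X y; exact: eps_surj.
have ch0 : forall X (a : mob (K 0) X), eL X (dn 0 X a) = del X (eK X a).
  move=> X a; rewrite /eL /dn /del /eK; apply: indmap_delta => X0 x; exact: cm0.
have chS : forall n X (a : mob (K n.+1) X), dL n X (dn n.+1 X a) = dn n X (dK n X a).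
  move=> n X a; rewrite /dL /dn /dK; apply: indmap_delta => X0 x; exact: cmS.
exists (@Cn B L K), (@dC B L K dL dK dn), (@eC B L K LL M eL ep); split.
- split; first exact: (@dC_hom B L K dL dK dn hdL hdK hdn).
  exact: (@eC_epi B L K LL M eL ep heL hep sL ep_surj).
- move=> n _; apply: ds_proj; first exact: ind_proj.
  case: n => [|m] /=; first exact: zmod_proj.
  apply: ind_proj; exact: (tw_proj hpsi1 hpsi2 hfinv1 hfinv2 (projP m)).
- move=> n hn X [b a] /=; congr pair.
    apply: ind_ext => k /=; apply: zeroP; lia.
  case: n hn b a => [|m] hm b a /=; first by case: a.
  apply: ind_ext => k /=; apply: zeroP; lia.
- exact: (@cone_exact0 B L K LL KK M dL dK eL eK del ep dn heL exL0 sK eps_del ker_ep ch0).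
- move=> n; exact: (@cone_exactS B L K LL KK dL dK eL eK del dn hdL hdK heL hdn exL0 exL exK0 exK del_inj ch0 chS n).
Qed.

End Final.


Theorem mainTheorem15 (A : rawcat) (F : rawfunctor A A)
    (hA : additive A) (hF : automorphism F) :
  (forall (M : module (twisted_poly hA hF)) (d : nat),
      pdim_le (istar M) d -> pdim_le M d.+1) /\
  (forall d : nat, gldim_le A d -> gldim_le (twisted_poly hA hF) d.+1).
Proof.
split.
  move=> M d h; exact: (part1 hF h).
move=> d hg M; apply: (part1 hF); exact: (hg (resM M)).
Qed.
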